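(* For $A\in\mathsf{T^*A}$ and a $*$-subalgebra $S\subseteq A$, let $c^*_A(S)$ denote the closure of $S$ in the $*$-representation topology $\mathcal T_A$. Then: (a) $c^*=K^\alpha=K^\eta$, i.e. for every $A\in\mathsf{T^*A}$ and every $*$-subalgebra $S\subseteq A$, $$c^*_A(S)=\alpha_A^{-1}\big(\overline{\alpha_A(S)}^{\,PC^*(A)}\big)=\eta_A^{-1}\big(\overline{\eta_A(S)}^{\,\overline{PC^*}(A)}\big);$$ (b) $c^*$ is finitely productive: $c^*_{A\times B}(S\times T)=c^*_A(S)\times c^*_B(T)$ for $*$-subalgebras $S\subseteq A$, $T\subseteq B$; (c) $A\in\mathsf{T^*A}$ is $c^*$-separated (the diagonal $\Delta_A$ satisfies $c^*_{A\times A}(\Delta_A)=\Delta_A$) if and only if $\alpha_A$ is injective, if and only if $A_R=0$; in particular every algebra in $\mathsf{P^*A}$ is $c^*$-separated; (d) $A\in\mathsf{T^*A}$ is $c^*$-compact in $\mathsf{T^*A}$ if and only if $PC^*(A)$ is $K$-compact in $\mathsf{P^*A}$; and in this case $\eta_A$ is surjective.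
   Context: A $*$-algebra is a complex algebra with an involution $a\mapsto a^*$ satisfying $(a+\lambda b)^*=a^*+\bar\lambda b^*$ and $(ab)^*=b^*a^*$. A topological $*$-algebra is a $*$-algebra with a topology making addition, multiplication, additive inverse and involution jointly continuous; $\mathsf{T^*A}$ is the category of topological $*$-algebras and continuous $*$-homomorphisms; its subobjects are $*$-subalgebras with the subspace topology. A $C^*$-seminorm on $A$ is a seminorm $p$ with $p(ab)\le p(a)p(b)$ and $p(a^*a)=p(a)^2$. $\mathcal N(A)$ is the set of continuous $C^*$-seminorms on $A$, directed pointwise. For $p\in\mathcal N(A)$, $A_p$ is the completion of $A/\ker p$ with respect to the $C^*$-norm induced by $p$. $\mathcal T_A$ (the $*$-representation topology) is the initial topology on $A$ induced by the seminorms in $\mathcal N(A)$, and $A_R=\bigcap_{p\in\mathcal N(A)}\ker p$ is the reducing ideal. $\overline{PC^*}(A)=\lim_{p\in\mathcal N(A)}A_p$ (limit in $\mathsf{T^*A}$, connecting maps $A_q\to A_p$ for $q\ge p$), and $\eta_A:A\to\overline{PC^*}(A)$, $\eta_A(x)=(x+\ker p)_p$. $PC^*(A)=\eta_A(A)$ with the subspace topology from $\overline{PC^*}(A)$, and $\alpha_A:A\to PC^*(A)$ is $\eta_A$ with restricted codomain. $\mathsf{P^*A}$ is the full subcategory of $\mathsf{T^*A}$ of algebras $A$ with $A_R=0$ whose topology equals $\mathcal T_A$; $A\mapsto PC^*(A)$ is a reflector onto it with reflection $\alpha_A$. $K$ denotes the Kuratowski (topological) closure of $*$-subalgebras. $A\in\mathsf{T^*A}$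 is $c^*$-compact in $\mathsf{T^*A}$ if for every $B\in\mathsf{T^*A}$ and every $*$-subalgebra $S\subseteq A\times B$, $\pi_B(c^*_{A\times B}(S))=c^*_B(\pi_B(S))$; $P\in\mathsf{P^*A}$ is $K$-compact in $\mathsf{P^*A}$ if for every $B\in\mathsf{P^*A}$ and every $*$-subalgebra $S\subseteq P\times B$, $\pi_B(\overline S)=\overline{\pi_B(S)}$. *)

(* Defs.v *)
From mathcomp Require Import all_boot all_order all_algebra.
From mathcomp Require Import all_classical all_reals all_analysis.
From mathcomp Require Import Rstruct Rstruct_topology complex.
Set Implicit Arguments. Unset Strict Implicit. Unset Printing Implicit Defensive.
Import Order.TTheory GRing.Theory Num.Theory numFieldNormedType.Exports.
Local Open Scope classical_set_scope.
Local Open Scope ring_scope.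

Notation RR := Rdefinitions.R.
Notation CC := (complex RR).
Definition cnorm (l : CC) : RR := Normc.normc l.
Definition cconj (l : CC) : CC := conjc l.

Record raw := Raw {
  car :> Type;
  rzero : car;
  radd : car -> car -> car;
  ropp : car -> car;
  rscal : CC -> car -> car;
  rmul : car -> car -> car;
  rstar : car -> car;
  ropen : (car -> Prop) -> Prop }.

Arguments rzero {r}. Arguments radd {r}. Arguments ropp {r}.
Arguments rscal {r}. Arguments rmul {r}. Arguments rstar {r}.

Definition rsub (A : raw) (x y : A) : A := radd x (ropp y).

Definition is_star_alg (A : raw) : Prop :=
  (forall x y z : A, radd x (radd y z) = radd (radd x y) z) /\
  (forall x y : A, radd x y = radd y x) /\
  (forall x : A, radd rzero x = x) /\
  (forall x : A, radd x (ropp x) = rzero) /\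
  (forall (l : CC) (x y : A), rscal l (radd x y) = radd (rscal l x) (rscal l y)) /\
  (forall (l m : CC) (x : A), rscal (l + m) x = radd (rscal l x) (rscal m x)) /\
  (forall (l m : CC) (x : A), rscal (l * m) x = rscal l (rscal m x)) /\
  (forall x : A, rscal 1 x = x) /\
  (forall x y z : A, rmul x (rmul y z) = rmul (rmul x y) z) /\
  (forall x y z : A, rmul x (radd y z) = radd (rmul x y) (rmul x z)) /\
  (forall x y z : A, rmul (radd x y) z = radd (rmul x z) (rmul y z)) /\
  (forall (l : CC) (x y : A), rscal l (rmul x y) = rmul (rscal l x) y) /\
  (forall (l : CC) (x y : A), rscal l (rmul x y) = rmul x (rscal l y)) /\
  (forall x : A, rstar (rstar x) = x) /\
  (forall x y : A, rstar (radd x y) = radd (rstar x) (rstar y)) /\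
  (forall (l : CC) (x : A), rstar (rscal l x) = rscal (cconj l) (rstar x)) /\
  (forall x y : A, rstar (rmul x y) = rmul (rstar y) (rstar x)).

Definition is_topology (T : Type) (op : (T -> Prop) -> Prop) : Prop :=
  op (fun _ => True) /\ op (fun _ => False) /\
  (forall U V, op U -> op V -> op (fun x => U x /\ V x)) /\
  (forall F : (T -> Prop) -> Prop, (forall U, F U -> op U) ->
     op (fun x => exists U, F U /\ U x)).

Definition prod_open (X Y : Type) (opX : (X -> Prop) -> Prop)
  (opY : (Y -> Prop) -> Prop) (W : X * Y -> Prop) : Prop :=
  forall z, W z -> exists U V, opX U /\ opY V /\ U z.1 /\ V z.2 /\
    (forall a b, U a -> V b -> W (a, b)).

Definition cont1 (X Y : Type) (opX : (X -> Prop) -> Prop)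
  (opY : (Y -> Prop) -> Prop) (f : X -> Y) : Prop :=
  forall W, opY W -> opX (fun x => W (f x)).

Definition cont2 (X Y Z : Type) (opX : (X -> Prop) -> Prop)
  (opY : (Y -> Prop) -> Prop) (opZ : (Z -> Prop) -> Prop) (f : X -> Y -> Z) :=
  forall W, opZ W -> prod_open opX opY (fun z => W (f z.1 z.2)).

Definition is_tsa (A : raw) : Prop :=
  is_star_alg A /\ is_topology (@ropen A) /\
  cont2 (@ropen A) (@ropen A) (@ropen A) radd /\
  cont2 (@ropen A) (@ropen A) (@ropen A) rmul /\
  cont1 (@ropen A) (@ropen A) ropp /\
  cont1 (@ropen A) (@ropen A) rstar.

Definition is_ssub (A : raw) (S : A -> Prop) : Prop :=
  S rzero /\ (forall x y, S x -> S y -> S (radd x y)) /\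
  (forall l x, S x -> S (rscal l x)) /\
  (forall x y, S x -> S y -> S (rmul x y)) /\
  (forall x, S x -> S (rstar x)).

Definition prod_raw (A B : raw) : raw :=
  @Raw (A * B)%type (rzero, rzero)
    (fun z w => (radd z.1 w.1, radd z.2 w.2))
    (fun z => (ropp z.1, ropp z.2))
    (fun l z => (rscal l z.1, rscal l z.2))
    (fun z w => (rmul z.1 w.1, rmul z.2 w.2))
    (fun z => (rstar z.1, rstar z.2))
    (prod_open (@ropen A) (@ropen B)).

Definition closure_of (T : Type) (op : (T -> Prop) -> Prop) (S : T -> Prop)
  (x : T) : Prop :=
  forall U, op U -> U x -> exists y, U y /\ S y.

Definition is_cstar_seminorm (A : raw) (p : A -> RR) : Prop :=
  (forall x y : A, p (radd x y) <= p x + p y) /\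
  (forall (l : CC) (x : A), p (rscal l x) = cnorm l * p x) /\
  (forall x y : A, p (rmul x y) <= p x * p y) /\
  (forall x : A, p (rmul (rstar x) x) = p x ^+ 2).

Definition cont_real (A : raw) (p : A -> RR) : Prop :=
  forall (x : A) (e : RR), 0 < e ->
    exists U, @ropen A U /\ U x /\ forall y, U y -> `|p y - p x| < e.

Definition NA (A : raw) (p : A -> RR) : Prop :=
  is_cstar_seminorm p /\ cont_real p.

Definition star_open (A : raw) (U : A -> Prop) : Prop :=
  forall x, U x -> exists (ps : list (A -> RR)) (e : RR), 0 < e /\
    (forall p, List.In p ps -> NA p) /\
    (forall y, (forall p, List.In p ps -> p (rsub y x) < e) -> U y).

Definition cstar (A : raw) (S : A -> Prop) : A -> Prop :=
  closure_of (@star_open A) S.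

Definition reducing (A : raw) (x : A) : Prop := forall p, NA p -> p x = 0.

(* \overline{PC^*}(A) = lim_p A_p.  An element of A_p (completion of     *)
(* A/ker p) is represented by a p-Cauchy sequence in A; an element of    *)
(* the limit by a compatible family of such, indexed by p in N(A).       *)
Definition fam (A : raw) := (A -> RR) -> nat -> A.

Definition pcauchy (A : raw) (p : A -> RR) (u : nat -> A) : Prop :=
  forall e : RR, 0 < e -> exists N, forall m n, (N <= m)%N -> (N <= n)%N ->
    p (rsub (u m) (u n)) < e.

(* [u] = 0 in A_p *)
Definition pnull (A : raw) (p : A -> RR) (u : nat -> A) : Prop :=
  (fun n => p (u n)) @ \oo --> (0 : RR).

Definition in_lim (A : raw) (u : fam A) : Prop :=
  (forall p, NA p -> pcauchy p (u p)) /\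
  (forall p q, NA p -> NA q -> (forall a, p a <= q a) ->
     pnull p (fun n => rsub (u q n) (u p n))).

Definition lim_eq (A : raw) (u v : fam A) : Prop :=
  forall p, NA p -> pnull p (fun n => rsub (u p n) (v p n)).

(* the C*-norm of A_p applied to [u] - [v] *)
Definition cdist (A : raw) (p : A -> RR) (u v : nat -> A) : RR :=
  limn (fun n => p (rsub (u n) (v n))).

(* open sets of the limit (subspace topology of the product topology) *)
Definition lim_open (A : raw) (U : fam A -> Prop) : Prop :=
  forall u, in_lim u -> U u -> exists (ps : list (A -> RR)) (e : RR), 0 < e /\
    (forall p, List.In p ps -> NA p) /\
    (forall v, in_lim v -> (forall p, List.In p ps -> cdist p (v p) (u p) < e) ->
       U v).

Definition lim_closure (A : raw) (X : fam A -> Prop) (u : fam A) : Prop :=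
  in_lim u /\
  forall U, lim_open U -> U u -> exists v, in_lim v /\ U v /\ X v.

Definition eta (A : raw) (x : A) : fam A := fun _ _ => x.

Definition eta_image (A : raw) (S : A -> Prop) : fam A -> Prop :=
  fun v => in_lim v /\ exists s, S s /\ lim_eq v (eta s).

Definition K_eta (A : raw) (S : A -> Prop) : A -> Prop :=
  fun x => lim_closure (eta_image S) (eta x).

Definition eta_surjective (A : raw) : Prop :=
  forall u : fam A, in_lim u -> exists x : A, lim_eq u (eta x).

(* PC^*(A) = eta(A): its points are the points eta(x) of the limit,   *)
(* i.e. classes {v in limit | v = eta x in the limit}.                  *)
Definition pc_class (A : raw) (x : A) : fam A -> Prop :=
  fun v => in_lim v /\ lim_eq v (eta x).

Definition pc_car (A : raw) := {X : fam A -> Prop | exists x : A, X = pc_class x}.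

Definition alpha (A : raw) (x : A) : pc_car A :=
  exist _ (pc_class x) (ex_intro _ x erefl).

Definition pc_rep (A : raw) (X : pc_car A) : A := projT1 (cid (proj2_sig X)).

Definition pc_open (A : raw) (V : pc_car A -> Prop) : Prop :=
  exists U, lim_open U /\ forall X, V X <-> exists v, proj1_sig X v /\ U v.

(* PC^*(A) with the operations inherited from the limit and the subspace topology *)
Definition PC (A : raw) : raw :=
  @Raw (pc_car A) (alpha rzero)
    (fun X Y => alpha (radd (pc_rep X) (pc_rep Y)))
    (fun X => alpha (ropp (pc_rep X)))
    (fun l X => alpha (rscal l (pc_rep X)))
    (fun X Y => alpha (rmul (pc_rep X) (pc_rep Y)))
    (fun X => alpha (rstar (pc_rep X)))
    (@pc_open A).

Definition K_alpha (A : raw) (S : A -> Prop) : A -> Prop :=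
  fun x => closure_of (@pc_open A) (fun X => exists s, S s /\ X = alpha s) (alpha x).

Definition in_PstarA (B : raw) : Prop :=
  (forall x : B, reducing x -> x = rzero) /\
  (forall U, @ropen B U <-> star_open U).

Definition cstar_separated (A : raw) : Prop :=
  forall z : prod_raw A A,
    cstar (fun w : prod_raw A A => w.1 = w.2) z <-> z.1 = z.2.

Definition cstar_compact (A : raw) : Prop :=
  forall B : raw, is_tsa B -> forall S : prod_raw A B -> Prop,
    is_ssub S -> forall b : B,
    (exists a : A, cstar S ((a, b) : prod_raw A B)) <->
    cstar (fun b' : B => exists a : A, S ((a, b') : prod_raw A B)) b.

Definition K_compact (P : raw) : Prop :=
  forall B : raw, is_tsa B -> in_PstarA B -> forall S : prod_raw P B -> Prop,
    is_ssub S -> forall b : B,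
    (exists a : P, closure_of (@ropen (prod_raw P B)) S ((a, b) : prod_raw P B)) <->
    closure_of (@ropen B) (fun b' : B => exists a : P, S ((a, b') : prod_raw P B)) b.

(* Main.v *)
Require Import Defs.
From mathcomp Require Import all_boot all_order all_algebra.
From mathcomp Require Import all_classical all_reals all_analysis.
From mathcomp Require Import Rstruct Rstruct_topology complex.
From mathcomp Require Import lra.
Set Implicit Arguments. Unset Strict Implicit. Unset Printing Implicit Defensive.
Import Order.TTheory GRing.Theory Num.Theory numFieldNormedType.Exports.
Local Open Scope classical_set_scope. Local Open Scope ring_scope.

Lemma cn0 : cnorm 0 = 0. Proof. exact: Normc.normc0. Qed.
Lemma cnm1 : cnorm (-1) = 1. Proof. rewrite /cnorm normcN. exact: Normc.normc1. Qed.
Lemma cn_ge0 l : 0 <= cnorm l. Proof. case: l => a b. rewrite /cnorm /=. exact: sqrtr_ge0. Qed.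
Lemma ccm1 : cconj (-1) = -1. Proof. rewrite /cconj (raddfN (@conjc RR)). congr (- _). by rewrite /conjc /= oppr0. Qed.

Ltac dsa H := case: H => aA [aC [a0 [aN [sD [sDl [sM [s1 [mA [mDr [mDl [smL [smR [stK [stD [stS stM]]]]]]]]]]]]]]].

Lemma RaddA A : is_star_alg A -> forall x y z : A, radd x (radd y z) = radd (radd x y) z.
Proof. by move=> H; dsa H. Qed.
Lemma RaddC A : is_star_alg A -> forall x y : A, radd x y = radd y x.
Proof. by move=> H; dsa H. Qed.
Lemma Radd0 A : is_star_alg A -> forall x : A, radd rzero x = x.
Proof. by move=> H; dsa H. Qed.
Lemma RaddN A : is_star_alg A -> forall x : A, radd x (ropp x) = rzero.
Proof. by move=> H; dsa H. Qed.
Lemma RscalD A : is_star_alg A -> forall l (x y : A), rscal l (radd x y) = radd (rscal l x) (rscal l y).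
Proof. by move=> H; dsa H. Qed.
Lemma RscalDl A : is_star_alg A -> forall l m (x : A), rscal (l + m) x = radd (rscal l x) (rscal m x).
Proof. by move=> H; dsa H. Qed.
Lemma RscalM A : is_star_alg A -> forall l m (x : A), rscal (l * m) x = rscal l (rscal m x).
Proof. by move=> H; dsa H. Qed.
Lemma Rscal1 A : is_star_alg A -> forall x : A, rscal 1 x = x.
Proof. by move=> H; dsa H. Qed.
Lemma RmulA A : is_star_alg A -> forall x y z : A, rmul x (rmul y z) = rmul (rmul x y) z.
Proof. by move=> H; dsa H. Qed.
Lemma RmulDr A : is_star_alg A -> forall x y z : A, rmul x (radd y z) = radd (rmul x y) (rmul x z).
Proof. by move=> H; dsa H. Qed.
Lemma RmulDl A : is_star_alg A -> forall x y z : A, rmul (radd x y) z = radd (rmul x z) (rmul y z).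
Proof. by move=> H; dsa H. Qed.
Lemma RscalmL A : is_star_alg A -> forall l (x y : A), rscal l (rmul x y) = rmul (rscal l x) y.
Proof. by move=> H; dsa H. Qed.
Lemma RscalmR A : is_star_alg A -> forall l (x y : A), rscal l (rmul x y) = rmul x (rscal l y).
Proof. by move=> H; dsa H. Qed.
Lemma RstarK A : is_star_alg A -> forall x : A, rstar (rstar x) = x.
Proof. by move=> H; dsa H. Qed.
Lemma RstarD A : is_star_alg A -> forall x y : A, rstar (radd x y) = radd (rstar x) (rstar y).
Proof. by move=> H; dsa H. Qed.
Lemma RstarS A : is_star_alg A -> forall l (x : A), rstar (rscal l x) = rscal (cconj l) (rstar x).
Proof. by move=> H; dsa H. Qed.
Lemma RstarM A : is_star_alg A -> forall x y : A, rstar (rmul x y) = rmul (rstar y) (rstar x).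
Proof. by move=> H; dsa H. Qed.

Lemma Raddr0 A : is_star_alg A -> forall x : A, radd x rzero = x.
Proof. by move=> H x; rewrite (RaddC H) (Radd0 H). Qed.
Lemma RaddNr A : is_star_alg A -> forall x : A, radd (ropp x) x = rzero.
Proof. by move=> H x; rewrite (RaddC H) (RaddN H). Qed.
Lemma RaddKl A : is_star_alg A -> forall x y : A, radd (ropp x) (radd x y) = y.
Proof. by move=> H x y; rewrite (RaddA H) (RaddNr H) (Radd0 H). Qed.
Lemma RaddIl A : is_star_alg A -> forall x y z : A, radd x y = radd x z -> y = z.
Proof. by move=> H x y z e; rewrite -(RaddKl H x y) e (RaddKl H). Qed.
Lemma Ropp_uniq A : is_star_alg A -> forall x y : A, radd x y = rzero -> y = ropp x.
Proof. by move=> H x y e; apply: (RaddIl H (x:=x)); rewrite e (RaddN H). Qed.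
Lemma RoppK A : is_star_alg A -> forall x : A, ropp (ropp x) = x.
Proof. by move=> H x; symmetry; apply: Ropp_uniq => //; rewrite (RaddNr H). Qed.
Lemma Ropp0 A : is_star_alg A -> ropp (@rzero A) = rzero.
Proof. by move=> H; symmetry; apply: Ropp_uniq => //; rewrite (Radd0 H). Qed.
Lemma RaddACA A : is_star_alg A -> forall a b c d : A,
  radd (radd a b) (radd c d) = radd (radd a c) (radd b d).
Proof.
move=> H a b c d; rewrite -!(RaddA H); congr (radd a _).
by rewrite !(RaddA H) [radd b c](RaddC H).
Qed.
Lemma RoppD A : is_star_alg A -> forall x y : A, ropp (radd x y) = radd (ropp x) (ropp y).
Proof.
move=> H x y; symmetry; apply: Ropp_uniq => //.
by rewrite (RaddACA H) !(RaddN H) (Radd0 H).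
Qed.
Lemma Rscal0 A : is_star_alg A -> forall x : A, rscal 0 x = rzero.
Proof.
move=> H x; apply: (RaddIl H (x:=rscal 0 x)).
by rewrite -(RscalDl H) addr0 (Raddr0 H).
Qed.
Lemma Rscalr0 A : is_star_alg A -> forall l, rscal l (@rzero A) = rzero.
Proof.
move=> H l; apply: (RaddIl H (x:=rscal l rzero)).
by rewrite -(RscalD H) !(Raddr0 H).
Qed.
Lemma RscalN1 A : is_star_alg A -> forall x : A, rscal (-1) x = ropp x.
Proof.
move=> H x; apply: Ropp_uniq => //.
by rewrite -{1}(Rscal1 H x) -(RscalDl H) subrr (Rscal0 H).
Qed.
Lemma Rmul0 A : is_star_alg A -> forall x : A, rmul rzero x = rzero.
Proof.
move=> H x; apply: (RaddIl H (x:=rmul rzero x)).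
by rewrite -(RmulDl H) !(Raddr0 H).
Qed.
Lemma Rmulr0 A : is_star_alg A -> forall x : A, rmul x rzero = rzero.
Proof.
move=> H x; apply: (RaddIl H (x:=rmul x rzero)).
by rewrite -(RmulDr H) !(Raddr0 H).
Qed.
Lemma RmulNl A : is_star_alg A -> forall x y : A, rmul (ropp x) y = ropp (rmul x y).
Proof. by move=> H x y; rewrite -!(RscalN1 H) (RscalmL H). Qed.
Lemma RmulNr A : is_star_alg A -> forall x y : A, rmul x (ropp y) = ropp (rmul x y).
Proof. by move=> H x y; rewrite -!(RscalN1 H) (RscalmR H). Qed.
Lemma Rstar0 A : is_star_alg A -> rstar (@rzero A) = rzero.
Proof.
move=> H; apply: (RaddIl H (x:=rstar rzero)).
by rewrite -(RstarD H) !(Raddr0 H).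
Qed.
Lemma RstarN A : is_star_alg A -> forall x : A, rstar (ropp x) = ropp (rstar x).
Proof.
move=> H x; apply: Ropp_uniq => //.
by rewrite -(RstarD H) (RaddN H) (Rstar0 H).
Qed.
Lemma RscalN A : is_star_alg A -> forall l (x : A), rscal l (ropp x) = ropp (rscal l x).
Proof.
move=> H l x; rewrite -!(RscalN1 H) -!(RscalM H); congr rscal; exact: mulrC.
Qed.

Lemma Rsub0 A : is_star_alg A -> forall x : A, rsub x rzero = x.
Proof. by move=> H x; rewrite /rsub (Ropp0 H) (Raddr0 H). Qed.
Lemma Rsubrr A : is_star_alg A -> forall x : A, rsub x x = rzero.
Proof. by move=> H x; rewrite /rsub (RaddN H). Qed.
Lemma Rsub0l A : is_star_alg A -> forall x : A, rsub rzero x = ropp x.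
Proof. by move=> H x; rewrite /rsub (Radd0 H). Qed.
Lemma RsubAdd A : is_star_alg A -> forall x y x' y' : A,
  rsub (radd x y) (radd x' y') = radd (rsub x x') (rsub y y').
Proof. by move=> H x y x' y'; rewrite /rsub (RoppD H) (RaddACA H). Qed.
Lemma RsubTr A : is_star_alg A -> forall x y z : A,
  radd (rsub z y) (rsub y x) = rsub z x.
Proof.
move=> H x y z; rewrite /rsub -(RaddA H); congr (radd z _).
by rewrite (RaddA H) (RaddNr H) (Radd0 H).
Qed.
Lemma RsubN A : is_star_alg A -> forall x y : A, rsub x y = ropp (rsub y x).
Proof. by move=> H x y; rewrite /rsub (RoppD H) (RoppK H) (RaddC H). Qed.
Lemma RsubOpp A : is_star_alg A -> forall x y : A, rsub (ropp x) (ropp y) = ropp (rsub x y).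
Proof. by move=> H x y; rewrite /rsub (RoppD H). Qed.
Lemma RsubScal A : is_star_alg A -> forall l (x y : A), rsub (rscal l x) (rscal l y) = rscal l (rsub x y).
Proof. by move=> H l x y; rewrite /rsub (RscalD H) (RscalN H). Qed.
Lemma RsubStar A : is_star_alg A -> forall x y : A, rsub (rstar x) (rstar y) = rstar (rsub x y).
Proof. by move=> H x y; rewrite /rsub (RstarD H) (RstarN H). Qed.
Lemma RsubMul A : is_star_alg A -> forall x y x' y' : A,
  rsub (rmul x y) (rmul x' y') = radd (rmul (rsub x x') y) (rmul x' (rsub y y')).
Proof.
move=> H x y x' y'; rewrite /rsub (RmulDl H) (RmulDr H) (RmulNl H) (RmulNr H).
rewrite -(RaddA H); congr (radd _ _).
by rewrite (RaddA H) (RaddNr H) (Radd0 H).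
Qed.
Lemma RsubSub A : is_star_alg A -> forall a b c d : A,
  rsub (rsub a b) (rsub c d) = rsub (rsub a c) (rsub b d).
Proof. by move=> H a b c d; rewrite {1}/rsub {1}/rsub (RsubAdd H) (RsubOpp H). Qed.
Lemma RsubSubr A : is_star_alg A -> forall a b c : A,
  rsub (rsub a c) (rsub b c) = rsub a b.
Proof. by move=> H a b c; rewrite (RsubSub H) (Rsubrr H) (Rsub0 H). Qed.
Lemma RsubK A : is_star_alg A -> forall x y : A, radd (rsub x y) y = x.
Proof. by move=> H x y; rewrite /rsub -(RaddA H) (RaddNr H) (Raddr0 H). Qed.
Lemma Raddsub A : is_star_alg A -> forall x y : A, rsub (radd x y) x = y.
Proof. by move=> H x y; rewrite /rsub (RaddC H) (RaddA H) (RaddNr H) (Radd0 H). Qed.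
Lemma Rsub_eq0 A : is_star_alg A -> forall x y : A, rsub x y = rzero -> x = y.
Proof. by move=> H x y e; rewrite -(RsubK H x y) e (Radd0 H). Qed.

Definition semi (A : raw) (N : A -> RR) : Prop :=
  (forall x y : A, N (radd x y) <= N x + N y) /\
  (forall (l : CC) (x : A), N (rscal l x) = cnorm l * N x) /\
  (forall x y : A, N (rmul x y) <= N x * N y) /\
  (forall x : A, N (rstar x) = N x).

Lemma sn_add (A : raw) (N : A -> RR) : semi N -> forall x y, N (radd x y) <= N x + N y.
Proof. by case. Qed.
Lemma sn_scal (A : raw) (N : A -> RR) : semi N -> forall l x, N (rscal l x) = cnorm l * N x.
Proof. by case=> _ []. Qed.
Lemma sn_mul (A : raw) (N : A -> RR) : semi N -> forall x y, N (rmul x y) <= N x * N y.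
Proof. by case=> _ [] _ []. Qed.
Lemma sn_star (A : raw) (N : A -> RR) : semi N -> forall x, N (rstar x) = N x.
Proof. by case=> _ [] _ []. Qed.

Lemma sn0 (A : raw) (N : A -> RR) : is_star_alg A -> semi N -> N rzero = 0.
Proof. move=> H hN; by rewrite -(Rscal0 H rzero) (sn_scal hN) cn0 mul0r. Qed.
Lemma snN (A : raw) (N : A -> RR) : is_star_alg A -> semi N -> forall x, N (ropp x) = N x.
Proof. move=> H hN x; by rewrite -(RscalN1 H) (sn_scal hN) cnm1 mul1r. Qed.
Lemma sn_ge0 (A : raw) (N : A -> RR) : is_star_alg A -> semi N -> forall x, 0 <= N x.
Proof.
move=> H hN x; have := sn_add hN x (ropp x).
rewrite (RaddN H) (sn0 H hN) (snN H hN) => h; lra.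
Qed.
Lemma sn_sym (A : raw) (N : A -> RR) : is_star_alg A -> semi N -> forall x y, N (rsub x y) = N (rsub y x).
Proof. by move=> H hN x y; rewrite (RsubN H) (snN H hN). Qed.
Lemma sn_tri (A : raw) (N : A -> RR) : is_star_alg A -> semi N -> forall x y z,
  N (rsub z x) <= N (rsub z y) + N (rsub y x).
Proof. by move=> H hN x y z; rewrite -(RsubTr H x y z) (sn_add hN). Qed.
Lemma sn_le (A : raw) (N : A -> RR) : is_star_alg A -> semi N -> forall x y,
  N x <= N y + N (rsub x y).
Proof.
move=> H hN x y; have := sn_tri H hN rzero y x.
rewrite !(Rsub0 H) => h; lra.
Qed.
Lemma sn_absdiff (A : raw) (N : A -> RR) : is_star_alg A -> semi N -> forall x y,
  `|N x - N y| <= N (rsub x y).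
Proof.
move=> H hN x y; have h1 := sn_le H hN x y; have h2 := sn_le H hN y x.
rewrite (sn_sym H hN y x) in h2. rewrite ler_norml; apply/andP; split; lra.
Qed.
Lemma sn_submul (A : raw) (N : A -> RR) : is_star_alg A -> semi N -> forall x y x' y',
  N (rsub (rmul x y) (rmul x' y')) <= N (rsub x x') * N y + N x' * N (rsub y y').
Proof.
move=> H hN x y x' y'; rewrite (RsubMul H).
apply: le_trans (sn_add hN _ _) _; apply: lerD; exact: sn_mul.
Qed.

Lemma cstar_semi (A : raw) (p : A -> RR) : is_star_alg A -> is_cstar_seminorm p -> semi p.
Proof.
move=> H [hD [hS [hM hC]]].
have h0 : semi (A:=A) p -> True by [].
have ge0 : forall x, 0 <= p x.
  move=> x; have := hD x (ropp x).
  rewrite (RaddN H) -(RscalN1 H) hS cnm1 mul1r.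
  have -> : p rzero = 0 by rewrite -(Rscal0 H rzero) hS cn0 mul0r.
  move=> h; lra.
have le : forall x, p x <= p (rstar x).
  move=> x; have := hM (rstar x) x; rewrite hC => h.
  have g1 := ge0 x; have g2 := ge0 (rstar x).
  have [hx|hx] := leP (p x) 0; first lra.
  rewrite expr2 in h; nra.
split => //; split => //; split => // x.
apply/eqP; rewrite eq_le le andbT.
by rewrite -{2}(RstarK H x) le.
Qed.

Lemma NA_semi (A : raw) (p : A -> RR) : is_star_alg A -> NA p -> semi p.
Proof. by move=> H [hp _]; apply: cstar_semi. Qed.

Lemma le0_of_lt (a : RR) : (forall e : RR, 0 < e -> a < e) -> a <= 0.
Proof.
move=> h; have [|ha] := leP a 0 => //.
have := h a ha; by rewrite ltxx.
Qed.

Lemma list_min (T : Type) (ps : list T) (P : T -> RR -> Prop) :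
  (forall p d d', 0 < d' -> d' <= d -> P p d -> P p d') ->
  (forall p, List.In p ps -> exists d, 0 < d /\ P p d) ->
  exists d, 0 < d /\ forall p, List.In p ps -> P p d.
Proof.
move=> mono; elim: ps => [|a ps IH] h.
  by exists 1; split => //.
have [d1 [d1p P1]] := h a (or_introl erefl).
have [d2 [d2p P2]] := IH (fun p hp => h p (or_intror hp)).
exists (Order.min d1 d2); split; first by rewrite lt_min d1p d2p.
move=> p [<-|hp].
  apply: mono P1; first by rewrite lt_min d1p d2p.
  by rewrite ge_min lexx.
apply: mono (P2 p hp); first by rewrite lt_min d1p d2p.
by rewrite ge_min lexx orbT.
Qed.

Lemma list_delta (T : Type) (ps : list T) (f : T -> RR) (e : RR) :
  (forall p, List.In p ps -> f p < e) ->
  exists d, 0 < d /\ forall p, List.In p ps -> f p + d <= e.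
Proof.
move=> h; apply: list_min.
  move=> p d d' h1 h2 h3; lra.
move=> p hp; exists (e - f p); have := h p hp => hh; split; lra.
Qed.

Lemma delta_exists (c e : RR) : 0 <= c -> 0 < e ->
  exists d, 0 < d /\ d <= 1 /\ d * c < e.
Proof.
move=> hc he.
have kp : 0 < c + e + 1 by lra.
exists (e / (c + e + 1)).
have hk : e / (c + e + 1) * (c + e + 1) = e by rewrite mulfVK // gt_eqF.
have dp : 0 < e / (c + e + 1) by apply: divr_gt0.
move: hk dp; set d := e / (c + e + 1) => hk dp.
split => //; split; nra.
Qed.

Lemma NA0 (A : raw) : is_tsa A -> NA (fun _ : A => 0).
Proof.
move=> [H [[hT _] _]]; split.
  split; first by move=> *; rewrite addr0.
  split; first by move=> *; rewrite mulr0.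
  split; first by move=> *; rewrite mulr0.
  by move=> *; rewrite expr2 mulr0.
by move=> x e he; exists (fun _ => True); split; [exact: hT| split => // y _; rewrite subrr normr0].
Qed.

Lemma max_close (a b c d e : RR) : `|a - c| < e -> `|b - d| < e ->
  `|Num.max a b - Num.max c d| < e.
Proof.
rewrite !ltr_norml => /andP[h1 h2] /andP[h3 h4].
have [hab|hab] := leP a b; have [hcd|hcd] := leP c d;
  rewrite ?(max_r hab) ?(max_r hcd) ?(max_l (ltW hab)) ?(max_l (ltW hcd));
  apply/andP; split; lra.
Qed.

Lemma NAmax (A : raw) (p q : A -> RR) : is_tsa A -> NA p -> NA q ->
  NA (fun x => Num.max (p x) (q x)).
Proof.
move=> [H [[_ [_ [hI _]]] _]] hp hq.
have sp := NA_semi H hp; have sq := NA_semi H hq.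
have gp := sn_ge0 H sp; have gq := sn_ge0 H sq.
split.
  split.
    move=> x y; rewrite ge_max; apply/andP; split.
      apply: le_trans (sn_add sp x y) _; apply: lerD; by rewrite le_max lexx.
    apply: le_trans (sn_add sq x y) _; apply: lerD; by rewrite le_max lexx ?orbT.
  split.
    move=> l x /=; rewrite (sn_scal sp) (sn_scal sq).
    have cg := cn_ge0 l.
    have [h|h] := leP (p x) (q x).
      rewrite ?(max_r h) max_r //; exact: ler_wpM2l.
    rewrite ?(max_l (ltW h)) max_l //; apply: ler_wpM2l => //; exact: ltW.
  split.
    move=> x y; rewrite ge_max; apply/andP; split.
      apply: le_trans (sn_mul sp x y) _; apply: ler_pM; rewrite ?gp ?le_max ?lexx //.
    apply: le_trans (sn_mul sq x y) _; apply: ler_pM; rewrite ?gq ?le_max ?lexx ?orbT //.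
  move=> x; case: hp => [[_ [_ [_ Cp]]] _]; case: hq => [[_ [_ [_ Cq]]] _].
  rewrite Cp Cq; have g1 := gp x; have g2 := gq x.
  have [h|h] := leP (p x) (q x).
    rewrite ?(max_r h) max_r //; rewrite !expr2; nra.
  rewrite ?(max_l (ltW h)) max_l //; rewrite !expr2; nra.
move=> x e he.
have [U [oU [Ux hU]]] := hp.2 x e he.
have [V [oV [Vx hV]]] := hq.2 x e he.
exists (fun y => U y /\ V y); split; first exact: hI.
split => // y [Uy Vy]; apply: max_close; [exact: hU|exact: hV].
Qed.

Lemma NA_dom (A : raw) (ps : list (A -> RR)) : is_tsa A ->
  (forall p, List.In p ps -> NA p) ->
  exists q, NA q /\ forall p, List.In p ps -> forall x, p x <= q x.
Proof.
move=> hA; elim: ps => [|a ps IH] h.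
  by exists (fun _ => 0); split => //; exact: NA0.
have [q [hq dq]] := IH (fun p hp => h p (or_intror hp)).
exists (fun x => Num.max (a x) (q x)); split.
  by apply: NAmax => //; apply: h; left.
move=> p [<-|hp] x; rewrite le_max ?lexx //.
by rewrite dq ?orbT.
Qed.

Definition sn_open (A : raw) (F : (A -> RR) -> Prop) (U : A -> Prop) : Prop :=
  forall x, U x -> exists (ps : list (A -> RR)) (e : RR), 0 < e /\
    (forall p, List.In p ps -> F p) /\
    (forall y, (forall p, List.In p ps -> p (rsub y x) < e) -> U y).

Lemma star_open_sn (A : raw) U : star_open U <-> sn_open (@NA A) U.
Proof. by []. Qed.

Definition sball (A : raw) (ps : list (A -> RR)) (x : A) (e : RR) (y : A) : Prop :=
  forall p, List.In p ps -> p (rsub y x) < e.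

Definition semiF (A : raw) (F : (A -> RR) -> Prop) := forall p, F p -> semi p.

Lemma sball_center (A : raw) (ps : list (A -> RR)) x e : is_star_alg A ->
  (forall p, List.In p ps -> semi p) -> 0 < e -> sball ps x e x.
Proof. by move=> H hs he p hp; rewrite (Rsubrr H) (sn0 H (hs p hp)). Qed.

Lemma sball_open (A : raw) F (ps : list (A -> RR)) x e : is_star_alg A -> semiF F ->
  (forall p, List.In p ps -> F p) -> sn_open F (sball ps x e).
Proof.
move=> H hF hps y hy.
have [d [dp hd]] := @list_delta _ ps (fun p => p (rsub y x)) e hy.
exists ps, d; split => //; split => // z hz p hp.
have := sn_tri H (hF p (hps p hp)) x y z.
have := hz p hp; have := hd p hp => /= h1 h2 h3; lra.
Qed.

Lemma sn_top (A : raw) F : is_topology (@sn_open A F).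
Proof.
split; first by move=> x _; exists nil, 1; split => //.
split; first by move=> x [].
split.
  move=> U V hU hV x [Ux Vx].
  have [ps1 [e1 [e1p [h1 k1]]]] := hU x Ux.
  have [ps2 [e2 [e2p [h2 k2]]]] := hV x Vx.
  exists (ps1 ++ ps2), (Order.min e1 e2); split; first by rewrite lt_min e1p e2p.
  split.
    by move=> p /List.in_app_iff [hp|hp]; [exact: h1|exact: h2].
  move=> y hy; split.
    apply: k1 => p hp; apply: lt_le_trans (hy p _) _.
      by apply/List.in_app_iff; left.
    by rewrite ge_min lexx.
  apply: k2 => p hp; apply: lt_le_trans (hy p _) _.
    by apply/List.in_app_iff; right.
  by rewrite ge_min lexx orbT.
move=> Fm hF x [U [FU Ux]].
have [ps [e [ep [h k]]]] := hF U FU x Ux.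
exists ps, e; split => //; split => // y hy.
by exists U; split => //; apply: k.
Qed.

Lemma sn_closure (A : raw) F (S : A -> Prop) x : is_star_alg A -> semiF F ->
  closure_of (sn_open F) S x <->
  (forall ps e, 0 < e -> (forall p, List.In p ps -> F p) ->
     exists s, S s /\ forall p, List.In p ps -> p (rsub s x) < e).
Proof.
move=> H hF; split.
  move=> hc ps e ep hps.
  have [y [hy Sy]] := hc _ (@sball_open _ _ ps x e H hF hps)
    (@sball_center _ ps x e H (fun p hp => hF p (hps p hp)) ep).
  by exists y; split.
move=> h U hU Ux.
have [ps [e [ep [hps k]]]] := hU x Ux.
have [s [Ss hs]] := h ps e ep hps.
by exists s; split => //; apply: k.
Qed.

Lemma sn_tsa (C : raw) F : is_star_alg C -> semiF F ->
  (forall U, @ropen C U <-> sn_open F U) -> is_tsa C.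
Proof.
move=> H hF hop.
have top : is_topology (@ropen C).
  have [t1 [t2 [t3 t4]]] := sn_top F.
  split; first by apply/hop.
  split; first by apply/hop.
  split; first by move=> U V /hop hU /hop hV; apply/hop; apply: t3.
  move=> Fm hFm; apply/hop; apply: t4 => U /hFm; exact: (proj1 (hop U)).
have bo : forall ps x e, (forall p, List.In p ps -> F p) -> ropen (sball ps x e).
  by move=> ps x e hps; apply/hop; apply: sball_open.
have bc : forall ps (x : C) e, (forall p, List.In p ps -> F p) -> 0 < e -> sball ps x e x.
  by move=> ps x e hps ep; apply: sball_center => // p hp; apply: hF; apply: hps.
split => //; split => //; split.
  move=> W /hop hW [x y] /= Wxy.
  have [ps [e [ep [hps k]]]] := hW _ Wxy.
  exists (sball ps x (e / 2)), (sball ps y (e / 2)).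
  have e2 : 0 < e / 2 by lra.
  split; first exact: bo.
  split; first exact: bo.
  split; first exact: bc.
  split; first exact: bc.
  move=> a b ha hb; apply: k => p hp.
  rewrite (RsubAdd H); apply: le_lt_trans (sn_add (hF p (hps p hp)) _ _) _.
  have := ha p hp; have := hb p hp => h1 h2; lra.
split.
  move=> W /hop hW [x y] /= Wxy.
  have [ps [e [ep [hps k]]]] := hW _ Wxy.
  have [d [dp hd]] : exists d, 0 < d /\ forall p, List.In p ps -> forall a b,
      p (rsub a x) < d -> p (rsub b y) < d -> p (rsub (rmul a b) (rmul x y)) < e.
    apply: list_min.
      move=> p d d' h1 h2 h3 a b ha hb.
      by apply: h3; [exact: lt_le_trans ha h2|exact: lt_le_trans hb h2].
    move=> p hp; have sp := hF p (hps p hp).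
    have g := sn_ge0 H sp.
    have [d [dp [d1 dc]]] := @delta_exists (p x + p y + 1) e
      (addr_ge0 (addr_ge0 (g x) (g y)) ler01) ep.
    exists d; split => // a b ha hb.
    apply: le_lt_trans (sn_submul H sp a b x y) _.
    have hb2 := sn_le H sp b y.
    have := g (rsub a x); have := g (rsub b y); have := g b; have := g x; have := g y.
    move=> g1 g2 g3 g4 g5.
    have i1 : p (rsub a x) * p b <= d * (p y + d).
      apply: ler_pM => //; [exact: ltW|lra].
    have i2 : p x * p (rsub b y) <= p x * d by apply: ler_wpM2l => //; exact: ltW.
    nra.
  exists (sball ps x d), (sball ps y d).
  split; first exact: bo.
  split; first exact: bo.
  split; first exact: bc.
  split; first exact: bc.
  move=> a b ha hb; apply: k => p hp; apply: hd => //; [exact: ha|exact: hb].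
split.
  move=> W /hop hW; apply/hop => x Wx.
  have [ps [e [ep [hps k]]]] := hW _ Wx.
  exists ps, e; split => //; split => // y hy; apply: k => p hp.
  by rewrite (RsubOpp H) (snN H (hF p (hps p hp))); apply: hy.
move=> W /hop hW; apply/hop => x Wx.
have [ps [e [ep [hps k]]]] := hW _ Wx.
exists ps, e; split => //; split => // y hy; apply: k => p hp.
by rewrite (RsubStar H) (sn_star (hF p (hps p hp))); apply: hy.
Qed.

Lemma sn_cont (C : raw) F N : is_star_alg C -> semiF F ->
  (forall U, sn_open F U -> @ropen C U) -> F N -> cont_real N.
Proof.
move=> H hF hop hN x e ep.
exists (sball [:: N] x e); split.
  apply: hop; apply: sball_open => // p [<-|[]] //.
split; first by apply: sball_center => // p [<-|[]]; exact: hF.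
move=> y hy; apply: le_lt_trans (sn_absdiff H (hF N hN) y x) _.
by apply: hy; left.
Qed.

Lemma sn_dom (C : raw) F q : is_star_alg C -> semi q -> cont_real q ->
  (forall U, @ropen C U -> sn_open F U) ->
  forall x e, 0 < e -> exists ps d, 0 < d /\ (forall p, List.In p ps -> F p) /\
    forall y, sball ps x d y -> q (rsub y x) < e.
Proof.
move=> H hq cq hop x e ep.
have [U [oU [U0 hU]]] := cq rzero e ep.
have [ps [d [dp [hps k]]]] := hop U oU rzero U0.
exists ps, d; split => //; split => // y hy.
have hk : forall p, List.In p ps -> p (rsub (rsub y x) rzero) < d.
  by move=> p hp; rewrite (Rsub0 H); apply: hy.
have := hU _ (k _ hk); rewrite (sn0 H hq) subr0 => h.
exact: le_lt_trans (ler_norm _) h.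
Qed.

Lemma combine_lists (C : raw) (F G : (C -> RR) -> Prop) (x : C) (e : RR) :
  (forall p, G p -> exists ps d, 0 < d /\ (forall q, List.In q ps -> F q) /\
    forall y, sball ps x d y -> p (rsub y x) < e) ->
  forall qs, (forall p, List.In p qs -> G p) ->
  exists ps d, 0 < d /\ (forall q, List.In q ps -> F q) /\
    forall y, sball ps x d y -> sball qs x e y.
Proof.
move=> hG; elim=> [|a qs IH] hqs.
  by exists nil, 1; split => //; split => // y _ p [].
have [ps1 [d1 [d1p [h1 k1]]]] := hG a (hqs a (or_introl erefl)).
have [ps2 [d2 [d2p [h2 k2]]]] := IH (fun p hp => hqs p (or_intror hp)).
exists (ps1 ++ ps2), (Order.min d1 d2); split; first by rewrite lt_min d1p d2p.
split; first by move=> q /List.in_app_iff [] ?; [exact: h1|exact: h2].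
move=> y hy p [<-|hp].
  apply: k1 => q hq; apply: lt_le_trans (hy q _) _.
    by apply/List.in_app_iff; left.
  by rewrite ge_min lexx.
apply: k2 => // q hq; apply: lt_le_trans (hy q _) _.
  by apply/List.in_app_iff; right.
by rewrite ge_min lexx orbT.
Qed.

Lemma sn_mono (C : raw) (F G : (C -> RR) -> Prop) U :
  (forall p, G p -> forall x e, 0 < e -> exists ps d, 0 < d /\
     (forall q, List.In q ps -> F q) /\ forall y, sball ps x d y -> p (rsub y x) < e) ->
  sn_open G U -> sn_open F U.
Proof.
move=> hG hU x Ux.
have [qs [e [ep [hqs k]]]] := hU x Ux.
have [ps [d [dp [hps kk]]]] :=
  combine_lists (fun p gp => hG p gp x e ep) hqs.
exists ps, d; split => //; split => // y hy; apply: k; exact: kk.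
Qed.

Lemma sn_eq (C : raw) (F G : (C -> RR) -> Prop) : is_star_alg C -> semiF F -> semiF G ->
  (forall p, F p -> G p) ->
  (forall p, G p -> cont_real p) ->
  (forall U, @ropen C U <-> sn_open F U) ->
  forall U, sn_open F U <-> sn_open G U.
Proof.
move=> H hF hG FG cG hop U; split.
  apply: sn_mono => p Fp x e ep; exists [:: p], e; split => //; split.
    by move=> q [<-|[]]; apply: FG.
  by move=> y hy; apply: hy; left.
apply: sn_mono => p Gp x e ep.
apply: (sn_dom H (hG p Gp) (cG p Gp)) => // V; exact: (proj1 (hop V)).
Qed.


Lemma sa_prod (A B : raw) : is_star_alg A -> is_star_alg B -> is_star_alg (prod_raw A B).
Proof.
move=> HA HB; rewrite /is_star_alg /=.
split; first by move=> [? ?] [? ?] [? ?] /=; rewrite (RaddA HA) (RaddA HB).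
split; first by move=> [? ?] [? ?] /=; rewrite (RaddC HA) (RaddC HB).
split; first by move=> [? ?] /=; rewrite (Radd0 HA) (Radd0 HB).
split; first by move=> [? ?] /=; rewrite (RaddN HA) (RaddN HB).
split; first by move=> ? [? ?] [? ?] /=; rewrite (RscalD HA) (RscalD HB).
split; first by move=> ? ? [? ?] /=; rewrite (RscalDl HA) (RscalDl HB).
split; first by move=> ? ? [? ?] /=; rewrite (RscalM HA) (RscalM HB).
split; first by move=> [? ?] /=; rewrite (Rscal1 HA) (Rscal1 HB).
split; first by move=> [? ?] [? ?] [? ?] /=; rewrite (RmulA HA) (RmulA HB).
split; first by move=> [? ?] [? ?] [? ?] /=; rewrite (RmulDr HA) (RmulDr HB).
split; first by move=> [? ?] [? ?] [? ?] /=; rewrite (RmulDl HA) (RmulDl HB).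
split; first by move=> ? [? ?] [? ?] /=; rewrite (RscalmL HA) (RscalmL HB).
split; first by move=> ? [? ?] [? ?] /=; rewrite (RscalmR HA) (RscalmR HB).
split; first by move=> [? ?] /=; rewrite (RstarK HA) (RstarK HB).
split; first by move=> [? ?] [? ?] /=; rewrite (RstarD HA) (RstarD HB).
split; first by move=> ? [? ?] /=; rewrite (RstarS HA) (RstarS HB).
by move=> [? ?] [? ?] /=; rewrite (RstarM HA) (RstarM HB).
Qed.

Lemma tsa_sa (A : raw) : is_tsa A -> is_star_alg A. Proof. by case. Qed.
Lemma tsa_top (A : raw) : is_tsa A -> is_topology (@ropen A). Proof. by case=> _ []. Qed.

Lemma NA_fst (A B : raw) (p : A -> RR) : is_tsa A -> is_tsa B -> NA p ->
  NA (fun z : prod_raw A B => p z.1).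
Proof.
move=> hA hB [[h1 [h2 [h3 h4]]] hc]; split.
  split; first by move=> a b; exact: h1.
  split; first by move=> l a; exact: h2.
  split; first by move=> a b; exact: h3.
  by move=> a; exact: h4.
move=> [x y] e ep; have [U [oU [Ux hU]]] := hc x e ep.
exists (fun z : prod_raw A B => U z.1); split.
  move=> [a b] /= Ua; exists U, (fun _ => True); split => //.
  split; first by case: (tsa_top hB).
  by split.
by split => // z; apply: hU.
Qed.

Lemma NA_snd (A B : raw) (p : B -> RR) : is_tsa A -> is_tsa B -> NA p ->
  NA (fun z : prod_raw A B => p z.2).
Proof.
move=> hA hB [[h1 [h2 [h3 h4]]] hc]; split.
  split; first by move=> a b; exact: h1.
  split; first by move=> l a; exact: h2.
  split; first by move=> a b; exact: h3.
  by move=> a; exact: h4.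
move=> [x y] e ep; have [U [oU [Ux hU]]] := hc y e ep.
exists (fun z : prod_raw A B => U z.2); split.
  move=> [a b] /= Ua; exists (fun _ => True), U; split.
    by case: (tsa_top hA).
  by split.
by split => // z; apply: hU.
Qed.

Lemma NA_inl (A B : raw) (q : prod_raw A B -> RR) : is_tsa A -> is_tsa B -> NA q ->
  NA (fun a : A => q (a, rzero)).
Proof.
move=> hA hB [[h1 [h2 [h3 h4]]] hc]; have HB := tsa_sa hB; split.
  split.
    by move=> x y; have := h1 (x, rzero) (y, rzero); rewrite /= (Radd0 HB).
  split; first by move=> l x; rewrite -h2 /= (Rscalr0 HB).
  split; first by move=> x y; have := h3 (x, rzero) (y, rzero); rewrite /= (Rmul0 HB).
  by move=> x; rewrite -h4 /= (Rstar0 HB) (Rmul0 HB).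
move=> x e ep; have [U [oU [Ux hU]]] := hc (x, rzero) e ep.
have [U1 [V1 [hO1 [hO2 [U1x [V10 k]]]]]] := oU _ Ux.
exists U1; split => //; split => // a Ua.
by apply: hU; apply: k.
Qed.

Lemma NA_inr (A B : raw) (q : prod_raw A B -> RR) : is_tsa A -> is_tsa B -> NA q ->
  NA (fun b : B => q (rzero, b)).
Proof.
move=> hA hB [[h1 [h2 [h3 h4]]] hc]; have HA := tsa_sa hA; split.
  split.
    by move=> x y; have := h1 (rzero, x) (rzero, y); rewrite /= (Radd0 HA).
  split; first by move=> l x; rewrite -h2 /= (Rscalr0 HA).
  split; first by move=> x y; have := h3 (rzero, x) (rzero, y); rewrite /= (Rmul0 HA).
  by move=> x; rewrite -h4 /= (Rstar0 HA) (Rmul0 HA).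
move=> x e ep; have [U [oU [Ux hU]]] := hc (rzero, x) e ep.
have [U1 [V1 [hO2 [hO1 [U10 [V1x k]]]]]] := oU _ Ux.
exists V1; split => //; split => // a Va.
by apply: hU; apply: k.
Qed.

Lemma q_split (A B : raw) (q : prod_raw A B -> RR) : is_star_alg A -> is_star_alg B ->
  semi q -> forall a b, q (a, b) <= q (a, rzero) + q (rzero, b).
Proof.
move=> HA HB hq a b; apply: le_trans (sn_add hq (a, rzero) (rzero, b)).
by rewrite /= (Raddr0 HA) (Radd0 HB).
Qed.

Lemma NA_semiF (A : raw) : is_star_alg A -> semiF (@NA A).
Proof. by move=> H p hp; apply: NA_semi. Qed.

Lemma cstar_char (A : raw) (S : A -> Prop) x : is_star_alg A ->
  cstar S x <-> (forall ps e, 0 < e -> (forall p, List.In p ps -> NA p) ->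
     exists s, S s /\ forall p, List.In p ps -> p (rsub s x) < e).
Proof. by move=> H; apply: sn_closure => //; apply: NA_semiF. Qed.

Lemma in_map_ex (T U : Type) (f : T -> U) (l : list T) y :
  List.In y (List.map f l) -> exists x, f x = y /\ List.In x l.
Proof. by move/List.in_map_iff. Qed.

Lemma map_pred (T U : Type) (P : T -> Prop) (Q : U -> Prop) (f : T -> U) (l : list T) :
  (forall p, List.In p l -> P p) -> (forall p, P p -> Q (f p)) ->
  forall q, List.In q (List.map f l) -> Q q.
Proof. by move=> h1 h2 q /List.in_map_iff [p [<- hp]]; apply: h2; apply: h1. Qed.

Lemma partb (A B : raw) (S : A -> Prop) (T : B -> Prop) (z : prod_raw A B) :
  is_tsa A -> is_tsa B ->
  cstar (fun w : prod_raw A B => S w.1 /\ T w.2) z <-> (cstar S z.1 /\ cstar T z.2).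
Proof.
move=> hA hB; have HA := tsa_sa hA; have HB := tsa_sa hB.
have HP := sa_prod HA HB.
rewrite (cstar_char _ _ HP) (cstar_char _ _ HA) (cstar_char _ _ HB); split.
  move=> h; split.
    move=> ps e ep hps.
    have [w [[Sw Tw] hw]] := h (List.map (fun p (w : prod_raw A B) => p w.1) ps) e ep
      (map_pred hps (fun p hp => NA_fst hA hB hp)).
    exists w.1; split => // p hp.
    exact: (hw (fun w : prod_raw A B => p w.1) (List.in_map _ _ _ hp)).
  move=> ps e ep hps.
  have [w [[Sw Tw] hw]] := h (List.map (fun p (w : prod_raw A B) => p w.2) ps) e ep
    (map_pred hps (fun p hp => NA_snd hA hB hp)).
  exists w.2; split => // p hp.
  exact: (hw (fun w : prod_raw A B => p w.2) (List.in_map _ _ _ hp)).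
move=> [h1 h2] qs e ep hqs.
have e2 : 0 < e / 2 by lra.
have [s [Ss hs]] := h1 (List.map (fun q a => q (a, rzero)) qs) (e / 2) e2
  (map_pred hqs (fun q hq => NA_inl hA hB hq)).
have [t [Tt ht]] := h2 (List.map (fun q b => q (rzero, b)) qs) (e / 2) e2
  (map_pred hqs (fun q hq => NA_inr hA hB hq)).
exists (s, t); split => // q hq.
have := hs _ (List.in_map (fun q a => q (a, rzero)) _ _ hq).
have := ht _ (List.in_map (fun q b => q (rzero, b)) _ _ hq).
have := q_split HA HB (NA_semi HP (hqs q hq)) (rsub s z.1) (rsub t z.2).
rewrite /= => h3 h4 h5.
change (q (rsub s z.1, rsub t z.2) < e).
lra.
Qed.

Lemma cstar_diag (A : raw) (x y : A) : is_tsa A ->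
  cstar (fun w : prod_raw A A => w.1 = w.2) ((x, y) : prod_raw A A) <-> reducing (rsub x y).
Proof.
move=> hA; have H := tsa_sa hA; have HP := sa_prod H H.
rewrite (cstar_char _ _ HP); split.
  move=> h p hp; have sp := NA_semi H hp.
  apply/eqP; rewrite eq_le (sn_ge0 H sp) andbT.
  apply: le0_of_lt => e ep.
  have e2 : 0 < e / 2 by lra.
  have hN : forall q, List.In q [:: (fun z : prod_raw A A => p z.1);
      (fun z : prod_raw A A => p z.2)] -> NA q.
    by move=> q [<-|[<-|[]]]; [exact: NA_fst|exact: NA_snd].
  have [w [hw k]] := h _ (e / 2) e2 hN.
  have k1 := k _ (or_introl erefl); have k2 := k _ (or_intror (or_introl erefl)).
  move: k1 k2; rewrite /= -hw => k1 k2.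
  have := sn_tri H sp y w.1 x.
  rewrite (sn_sym H sp x w.1) => k3; lra.
move=> hr qs e ep hqs; exists (x, x); split => // q hq.
have -> : rsub ((x, x) : prod_raw A A) (x, y) = (rzero, rsub x y).
  by rewrite /rsub /= (RaddN H).
by rewrite (hr _ (NA_inr hA hA (hqs q hq))).
Qed.

Definition tends (a : nat -> RR) (l : RR) : Prop :=
  forall e : RR, 0 < e -> exists N, forall n, (N <= n)%N -> `|a n - l| < e.

Lemma tends_cvg (a : nat -> RR) (l : RR) : tends a l -> a @ \oo --> l.
Proof. move=> H. apply/(@cvgrPdist_lt RR RR^o nat \oo _ a l). move=> e /H [N HN]. exists N => // n /= Hn. rewrite distrC. exact: HN. Qed.
Lemma cvg_tends (a : nat -> RR) (l : RR) : a @ \oo --> l -> tends a l.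
Proof. move/(@cvgrPdist_lt RR RR^o nat \oo _ a l) => H e /H [N _ HN]. exists N => n Hn. rewrite distrC. exact: HN. Qed.
Lemma tends_lim (a : nat -> RR) (l : RR) : tends a l -> limn a = l.
Proof. move/tends_cvg => H. apply: cvg_lim. exact: (@norm_hausdorff RR RR^o). exact: H. Qed.
Lemma cauchy_tends (a : nat -> RR) : (forall e : RR, 0 < e -> exists N, forall m n, (N <= m)%N -> (N <= n)%N -> `|a m - a n| < e) -> exists l, tends a l.
Proof. move=> H.
have : cauchy (a @ \oo : set_system RR^o).
 apply: (@cauchy_exP RR RR^o). move=> e He.
have [N HN] := H e He. exists (a N). exists N => // n /= Hn. rewrite /ball /= distrC. exact: HN.
move/cauchy_cvg => c. exists (lim (a @ \oo)). exact: cvg_tends c.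
Qed.

Lemma tends_const (c : RR) : tends (fun _ => c) c.
Proof. by move=> e ep; exists 0%N => n _; rewrite subrr normr0. Qed.

Lemma tends_le (a b : nat -> RR) l m : tends a l -> tends b m -> (forall n, a n <= b n) -> l <= m.
Proof.
move=> ha hb hab; have [//|hlt] := leP l m.
have e2 : 0 < (l - m) / 2 by lra.
have [N1 h1] := ha _ e2; have [N2 h2] := hb _ e2.
have := h1 (maxn N1 N2) (leq_maxl _ _); have := h2 (maxn N1 N2) (leq_maxr _ _).
have := hab (maxn N1 N2).
rewrite !ltr_norml => h3 /andP[h4 h5] /andP[h6 h7]; lra.
Qed.

Lemma tends_uniq (a : nat -> RR) l m : tends a l -> tends a m -> l = m.
Proof. by move=> h1 h2; apply/eqP; rewrite eq_le !(tends_le h1 h2, tends_le h2 h1). Qed.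

Lemma tends_near (a b : nat -> RR) (c : RR) : tends b 0 -> (forall n, `|a n - c| <= b n) -> tends a c.
Proof.
move=> hb h e ep; have [N hN] := hb e ep; exists N => n hn.
apply: le_lt_trans (h n) _; have := hN n hn; rewrite subr0 => k.
exact: le_lt_trans (ler_norm _) k.
Qed.

Lemma tends_add (a b : nat -> RR) l m : tends a l -> tends b m -> tends (fun n => a n + b n) (l + m).
Proof.
move=> ha hb e ep; have e2 : 0 < e / 2 by lra.
have [N1 h1] := ha _ e2; have [N2 h2] := hb _ e2; exists (maxn N1 N2) => n hn.
have := h1 n (leq_trans (leq_maxl _ _) hn); have := h2 n (leq_trans (leq_maxr _ _) hn).
rewrite !ltr_norml => /andP[h4 h5] /andP[h6 h7]; apply/andP; split; lra.
Qed.

Lemma pnull_tends (A : raw) (p : A -> RR) u : pnull p u <-> tends (fun n => p (u n)) 0.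
Proof. by split; [exact: cvg_tends|exact: tends_cvg]. Qed.

Lemma pc_cdist (A : raw) (p : A -> RR) u v : is_star_alg A -> semi p ->
  pcauchy p u -> pcauchy p v -> tends (fun n => p (rsub (u n) (v n))) (cdist p u v).
Proof.
move=> H sp hu hv.
have [l hl] : exists l, tends (fun n => p (rsub (u n) (v n))) l.
  apply: cauchy_tends => e ep; have e2 : 0 < e / 2 by lra.
  have [N1 h1] := hu _ e2; have [N2 h2] := hv _ e2.
  exists (maxn N1 N2) => m n hm hn.
  have hm1 := leq_trans (leq_maxl _ _) hm; have hm2 := leq_trans (leq_maxr _ _) hm.
  have hn1 := leq_trans (leq_maxl _ _) hn; have hn2 := leq_trans (leq_maxr _ _) hn.
  apply: le_lt_trans (sn_absdiff H sp _ _) _.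
  rewrite (RsubSub H).
  have := sn_add sp (rsub (u m) (u n)) (ropp (rsub (v m) (v n))).
  rewrite (snN H sp) => k.
  have := h1 m n hm1 hn1; have := h2 m n hm2 hn2 => k1 k2.
  rewrite /rsub in k k1 k2 *; lra.
by rewrite /cdist (tends_lim hl).
Qed.

Lemma cdist_tri (A : raw) (p : A -> RR) u v w : is_star_alg A -> semi p ->
  pcauchy p u -> pcauchy p v -> pcauchy p w ->
  cdist p u w <= cdist p u v + cdist p v w.
Proof.
move=> H sp hu hv hw.
apply: (tends_le (pc_cdist H sp hu hw) (tends_add (pc_cdist H sp hu hv) (pc_cdist H sp hv hw))).
by move=> n; apply: sn_tri.
Qed.

Lemma cdist_ge0 (A : raw) (p : A -> RR) u v : is_star_alg A -> semi p ->
  pcauchy p u -> pcauchy p v -> 0 <= cdist p u v.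
Proof.
move=> H sp hu hv; apply: (tends_le (tends_const 0) (pc_cdist H sp hu hv)).
by move=> n; apply: sn_ge0.
Qed.

Lemma pcauchy_const (A : raw) (p : A -> RR) (x : A) : is_star_alg A -> semi p ->
  pcauchy p (fun _ => x).
Proof. by move=> H sp e ep; exists 0%N => m n _ _; rewrite (Rsubrr H) (sn0 H sp). Qed.

Lemma cdist_const (A : raw) (p : A -> RR) (x y : A) : is_star_alg A -> semi p ->
  cdist p (fun _ => x) (fun _ => y) = p (rsub x y).
Proof. by move=> H sp; rewrite /cdist (tends_lim (tends_const _)). Qed.

Lemma cdist_near (A : raw) (p : A -> RR) u (s x : A) : is_star_alg A -> semi p ->
  pnull p (fun n => rsub (u n) s) -> tends (fun n => p (rsub (u n) x)) (p (rsub s x)).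
Proof.
move=> H sp /pnull_tends hu; apply: (@tends_near _ (fun n => p (rsub (u n) s))) => // n.
apply: le_trans (sn_absdiff H sp _ _) _; by rewrite (RsubSubr H).
Qed.

Lemma cdist_near_l (A : raw) (p : A -> RR) u (s x : A) : is_star_alg A -> semi p ->
  pnull p (fun n => rsub (u n) s) -> cdist p u (fun _ => x) = p (rsub s x).
Proof. by move=> H sp hu; rewrite /cdist (tends_lim (cdist_near x H sp hu)). Qed.

Lemma cdist_near_r (A : raw) (p : A -> RR) u (s x : A) : is_star_alg A -> semi p ->
  pnull p (fun n => rsub (u n) s) -> cdist p (fun _ => x) u = p (rsub x s).
Proof.
move=> H sp hu; rewrite /cdist.
have -> : (fun n => p (rsub x (u n))) = (fun n => p (rsub (u n) x)).
  by apply: funext => n; apply: sn_sym.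
by rewrite (tends_lim (cdist_near x H sp hu)) (sn_sym H sp).
Qed.

Lemma eta_in_lim (A : raw) (x : A) : is_star_alg A -> in_lim (eta x).
Proof.
move=> H; split.
  by move=> p hp; apply: pcauchy_const => //; apply: NA_semi.
move=> p q hp hq _; apply/pnull_tends; rewrite /eta (Rsubrr H) (sn0 H (NA_semi H hp)).
exact: tends_const.
Qed.

Lemma lim_eq_refl (A : raw) (u : fam A) : is_star_alg A -> lim_eq u u.
Proof.
move=> H p hp; apply/pnull_tends.
have -> : (fun n => p (rsub (u p n) (u p n))) = (fun _ => 0).
  by apply: funext => n; rewrite (Rsubrr H) (sn0 H (NA_semi H hp)).
exact: tends_const.
Qed.

Definition lball (A : raw) (v : fam A) (ps : list (A -> RR)) (e : RR) (w : fam A) : Prop :=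
  in_lim w /\ forall p, List.In p ps -> cdist p (w p) (v p) < e.

Lemma lball_open (A : raw) (v : fam A) ps e : is_star_alg A -> in_lim v ->
  (forall p, List.In p ps -> NA p) -> lim_open (lball v ps e).
Proof.
move=> H hv hps w hw [_ hwv].
have [d [dp hd]] := @list_delta _ ps (fun p => cdist p (w p) (v p)) e hwv.
exists ps, d; split => //; split => // w' hw' hc; split => // p hp.
have sp := NA_semi H (hps p hp).
have := cdist_tri H sp (hw'.1 p (hps p hp)) (hw.1 p (hps p hp)) (hv.1 p (hps p hp)).
have := hd p hp; have := hc p hp => /= h1 h2 h3; lra.
Qed.

Lemma lball_center (A : raw) (v : fam A) ps e : is_star_alg A -> in_lim v -> 0 < e ->
  (forall p, List.In p ps -> NA p) -> lball v ps e v.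
Proof.
move=> H hv ep hps; split => // p hp.
have sp := NA_semi H (hps p hp).
rewrite /cdist (@tends_lim _ 0) //.
have -> : (fun n => p (rsub (v p n) (v p n))) = (fun _ => 0).
  by apply: funext => n; rewrite (Rsubrr H) (sn0 H sp).
exact: tends_const.
Qed.

Lemma pc_class_eta (A : raw) (x : A) : is_star_alg A -> pc_class x (eta x).
Proof. by move=> H; split; [exact: eta_in_lim|exact: lim_eq_refl]. Qed.

Lemma rep_spec (A : raw) (X : pc_car A) : proj1_sig X = pc_class (pc_rep X).
Proof. by rewrite /pc_rep; case: (cid (proj2_sig X)). Qed.

Lemma alpha_rep (A : raw) (X : pc_car A) : alpha (pc_rep X) = X.
Proof. by case: X => X hX; rewrite /alpha; apply: eq_exist; rewrite -rep_spec. Qed.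

Lemma alpha_surj (A : raw) (X : pc_car A) : exists x, X = alpha x.
Proof. by exists (pc_rep X); rewrite alpha_rep. Qed.

Lemma class_red (A : raw) (x y : A) : is_star_alg A -> pc_class x = pc_class y -> reducing (rsub x y).
Proof.
move=> H e p hp.
have [_ h] : pc_class y (eta x) by rewrite -e; exact: pc_class_eta.
have := h p hp; rewrite /eta => /pnull_tends h1.
by apply: (tends_uniq (tends_const _) h1).
Qed.

Lemma red_sym (A : raw) (x y : A) : is_star_alg A -> reducing (rsub x y) -> reducing (rsub y x).
Proof. by move=> H h p hp; rewrite (sn_sym H (NA_semi H hp)) h. Qed.

Lemma red_class (A : raw) (x y : A) : is_star_alg A -> reducing (rsub x y) -> pc_class x = pc_class y.
Proof.
move=> H.
have k : forall a b : A, reducing (rsub a b) -> forall v, pc_class a v -> pc_class b v.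
  move=> a b hr v [hv hva]; split => // p hp; have sp := NA_semi H hp.
  have := hva p hp; rewrite /eta => /pnull_tends h1; apply/pnull_tends.
  apply: (@tends_near _ (fun n => p (rsub (v p n) a))) => // n.
  rewrite subr0 ger0_norm ?(sn_ge0 H sp) //.
  have := sn_tri H sp b a (v p n); rewrite (hr p hp) addr0 //.
move=> h; apply: funext => v; apply: propext; split; apply: k => //.
exact: red_sym.
Qed.

Lemma alpha_eqP (A : raw) (x y : A) : is_star_alg A -> alpha x = alpha y <-> reducing (rsub x y).
Proof.
move=> H; split.
  by move=> e; apply: class_red => //; exact: (f_equal (@proj1_sig _ _) e).
move=> h; rewrite /alpha; apply: eq_exist; exact: red_class.
Qed.

Lemma red_rep (A : raw) (x : A) : is_star_alg A -> reducing (rsub (pc_rep (alpha x)) x).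
Proof. by move=> H; apply/(alpha_eqP _ _ H); rewrite alpha_rep. Qed.

Lemma red_p (A : raw) (x y : A) (p : A -> RR) : is_star_alg A -> reducing (rsub x y) -> NA p -> p x = p y.
Proof.
move=> H h hp; have sp := NA_semi H hp; have := sn_absdiff H sp x y.
rewrite (h p hp) normr_le0 subr_eq0 => /eqP //.
Qed.

Lemma p_rep (A : raw) (x : A) (p : A -> RR) : is_star_alg A -> NA p -> p (pc_rep (alpha x)) = p x.
Proof. by move=> H hp; apply: red_p (red_rep x H) hp. Qed.

Lemma red_add (A : raw) (a b : A) : is_star_alg A -> reducing a -> reducing b -> reducing (radd a b).
Proof.
move=> H ha hb p hp; have sp := NA_semi H hp; apply/eqP; rewrite eq_le (sn_ge0 H sp) andbT.
by have := sn_add sp a b; rewrite (ha p hp) (hb p hp) addr0.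
Qed.
Lemma red_mull (A : raw) (a b : A) : is_star_alg A -> reducing a -> reducing (rmul a b).
Proof.
move=> H ha p hp; have sp := NA_semi H hp; apply/eqP; rewrite eq_le (sn_ge0 H sp) andbT.
by have := sn_mul sp a b; rewrite (ha p hp) mul0r.
Qed.
Lemma red_mulr (A : raw) (a b : A) : is_star_alg A -> reducing b -> reducing (rmul a b).
Proof.
move=> H hb p hp; have sp := NA_semi H hp; apply/eqP; rewrite eq_le (sn_ge0 H sp) andbT.
by have := sn_mul sp a b; rewrite (hb p hp) mulr0.
Qed.
Lemma red_scal (A : raw) l (a : A) : is_star_alg A -> reducing a -> reducing (rscal l a).
Proof. by move=> H ha p hp; rewrite (sn_scal (NA_semi H hp)) (ha p hp) mulr0. Qed.
Lemma red_opp (A : raw) (a : A) : is_star_alg A -> reducing a -> reducing (ropp a).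
Proof. by move=> H ha p hp; rewrite (snN H (NA_semi H hp)) (ha p hp). Qed.
Lemma red_star (A : raw) (a : A) : is_star_alg A -> reducing a -> reducing (rstar a).
Proof. by move=> H ha p hp; rewrite (sn_star (NA_semi H hp)) (ha p hp). Qed.

Lemma pc_add (A : raw) (x y : A) : is_star_alg A ->
  @radd (PC A) (alpha x) (alpha y) = alpha (radd x y).
Proof.
move=> H; apply/(alpha_eqP _ _ H); rewrite (RsubAdd H).
by apply: red_add => //; apply: red_rep.
Qed.
Lemma pc_opp (A : raw) (x : A) : is_star_alg A ->
  @ropp (PC A) (alpha x) = alpha (ropp x).
Proof. by move=> H; apply/(alpha_eqP _ _ H); rewrite (RsubOpp H); apply: red_opp => //; apply: red_rep. Qed.
Lemma pc_scal (A : raw) l (x : A) : is_star_alg A ->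
  @rscal (PC A) l (alpha x) = alpha (rscal l x).
Proof. by move=> H; apply/(alpha_eqP _ _ H); rewrite (RsubScal H); apply: red_scal => //; apply: red_rep. Qed.
Lemma pc_star (A : raw) (x : A) : is_star_alg A ->
  @rstar (PC A) (alpha x) = alpha (rstar x).
Proof. by move=> H; apply/(alpha_eqP _ _ H); rewrite (RsubStar H); apply: red_star => //; apply: red_rep. Qed.
Lemma pc_mul (A : raw) (x y : A) : is_star_alg A ->
  @rmul (PC A) (alpha x) (alpha y) = alpha (rmul x y).
Proof.
move=> H; apply/(alpha_eqP _ _ H); rewrite (RsubMul H).
apply: red_add => //; [apply: red_mull|apply: red_mulr] => //; exact: red_rep.
Qed.
Lemma pc_sub (A : raw) (x y : A) : is_star_alg A ->
  @rsub (PC A) (alpha x) (alpha y) = alpha (rsub x y).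
Proof. by move=> H; rewrite /rsub pc_opp // pc_add. Qed.
Lemma pc_zero (A : raw) : @rzero (PC A) = alpha rzero.
Proof. by []. Qed.

Lemma sa_PC (A : raw) : is_star_alg A -> is_star_alg (PC A).
Proof.
move=> H.
have S := alpha_surj.
split; first by move=> X Y Z; case: (S _ X) => x ->; case: (S _ Y) => y ->; case: (S _ Z) => z ->;
  rewrite !pc_add // (RaddA H).
split; first by move=> X Y; case: (S _ X) => x ->; case: (S _ Y) => y ->; rewrite !pc_add // (RaddC H).
split; first by move=> X; case: (S _ X) => x ->; rewrite pc_zero pc_add // (Radd0 H).
split; first by move=> X; case: (S _ X) => x ->; rewrite pc_opp // pc_add // (RaddN H).
split; first by move=> l X Y; case: (S _ X) => x ->; case: (S _ Y) => y ->;
  rewrite pc_add // !pc_scal // pc_add // (RscalD H).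
split; first by move=> l m X; case: (S _ X) => x ->; rewrite !pc_scal // pc_add // (RscalDl H).
split; first by move=> l m X; case: (S _ X) => x ->; rewrite !pc_scal // (RscalM H).
split; first by move=> X; case: (S _ X) => x ->; rewrite pc_scal // (Rscal1 H).
split; first by move=> X Y Z; case: (S _ X) => x ->; case: (S _ Y) => y ->; case: (S _ Z) => z ->;
  rewrite !pc_mul // (RmulA H).
split; first by move=> X Y Z; case: (S _ X) => x ->; case: (S _ Y) => y ->; case: (S _ Z) => z ->;
  rewrite !(pc_mul, pc_add) // (RmulDr H).
split; first by move=> X Y Z; case: (S _ X) => x ->; case: (S _ Y) => y ->; case: (S _ Z) => z ->;
  rewrite !(pc_mul, pc_add) // (RmulDl H).
split; first by move=> l X Y; case: (S _ X) => x ->; case: (S _ Y) => y ->;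
  rewrite !(pc_mul, pc_scal) // (RscalmL H).
split; first by move=> l X Y; case: (S _ X) => x ->; case: (S _ Y) => y ->;
  rewrite !(pc_mul, pc_scal) // (RscalmR H).
split; first by move=> X; case: (S _ X) => x ->; rewrite !pc_star // (RstarK H).
split; first by move=> X Y; case: (S _ X) => x ->; case: (S _ Y) => y ->;
  rewrite !(pc_star, pc_add) // (RstarD H).
split; first by move=> l X; case: (S _ X) => x ->; rewrite !(pc_star, pc_scal) // (RstarS H).
by move=> X Y; case: (S _ X) => x ->; case: (S _ Y) => y ->; rewrite !(pc_star, pc_mul) // (RstarM H).
Qed.

Lemma pc_sub_rep (A : raw) (X Y : PC A) (p : A -> RR) : is_star_alg A -> NA p ->
  p (pc_rep (rsub Y X)) = p (rsub (pc_rep Y) (pc_rep X)).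
Proof.
move=> H hp; have -> : rsub Y X = alpha (rsub (pc_rep Y) (pc_rep X)).
  by rewrite -pc_sub // !alpha_rep.
exact: p_rep.
Qed.

Definition FPC (A : raw) (N : PC A -> RR) : Prop :=
  exists p, NA p /\ N = (fun X => p (pc_rep X)).

Lemma FPC_semi (A : raw) : is_star_alg A -> semiF (@FPC A).
Proof.
move=> H N [p [hp ->]]; have sp := NA_semi H hp; have S := alpha_surj.
split; first by move=> X Y; case: (S _ X) => x ->; case: (S _ Y) => y ->;
  rewrite pc_add // !p_rep //; apply: sn_add.
split; first by move=> l X; case: (S _ X) => x ->; rewrite pc_scal // !p_rep //; apply: sn_scal.
split; first by move=> X Y; case: (S _ X) => x ->; case: (S _ Y) => y ->;
  rewrite pc_mul // !p_rep //; apply: sn_mul.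
by move=> X; case: (S _ X) => x ->; rewrite pc_star // !p_rep //; apply: sn_star.
Qed.

Lemma extract (A : raw) (Ns : list (PC A -> RR)) e : (forall N, List.In N Ns -> FPC N) ->
  exists ps, (forall p, List.In p ps -> NA p) /\
    forall Z : PC A, (forall p, List.In p ps -> p (pc_rep Z) < e) -> forall N, List.In N Ns -> N Z < e.
Proof.
elim: Ns => [|N Ns IH] h.
  by exists nil; split => // Z _ N [].
have [ps [hps k]] := IH (fun M hM => h M (or_intror hM)).
have [p [hp ->]] := h N (or_introl erefl).
exists (p :: ps); split.
  by move=> q [<-|hq]; [exact: hp|exact: hps].
move=> Z hZ M [<-|hM]; first by apply: hZ; left.
by apply: k => // q hq; apply: hZ; right.
Qed.

Lemma class_rep (A : raw) (X : pc_car A) v : proj1_sig X v -> in_lim v /\ lim_eq v (eta (pc_rep X)).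
Proof. by rewrite rep_spec. Qed.

Lemma PCtop (A : raw) : is_star_alg A -> forall V, @pc_open A V <-> sn_open (@FPC A) V.
Proof.
move=> H V; split.
  move=> [U [oU hV]] X VX.
  have [v [Xv Uv]] := (hV X).1 VX.
  have [hv hvX] := class_rep Xv.
  have [ps [e [ep [hps k]]]] := oU v hv Uv.
  exists (List.map (fun p (Y : PC A) => p (pc_rep Y)) ps), e; split => //; split.
    move=> q hq; apply: (map_pred (Q := @FPC A) hps _ hq) => p hp; by exists p.
  move=> Y hY; apply/(hV Y); exists (eta (pc_rep Y)); split.
    by rewrite rep_spec; apply: pc_class_eta.
  apply: k; first exact: eta_in_lim.
  move=> p hp; have sp := NA_semi H (hps p hp).
  rewrite /eta (cdist_near_r (pc_rep Y) H sp (hvX p (hps p hp))).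
  have := hY _ (List.in_map (fun p (Y : PC A) => p (pc_rep Y)) _ _ hp).
  by rewrite /= pc_sub_rep //; exact: hps.
move=> hV.
pose U := fun v : fam A => exists X, V X /\ exists ps e, 0 < e /\
  (forall p, List.In p ps -> NA p) /\
  (forall Y : pc_car A, (forall p, List.In p ps -> p (rsub (pc_rep Y) (pc_rep X)) < e) -> V Y) /\
  in_lim v /\ forall p, List.In p ps -> cdist p (v p) (eta (pc_rep X) p) < e.
exists U; split.
  move=> v hv [X [VX [ps [e [ep [hps [kV [_ hc]]]]]]]].
  have [d [dp hd]] := @list_delta _ ps (fun p => cdist p (v p) (eta (pc_rep X) p)) e hc.
  exists ps, d; split => //; split => // w hw hwv.
  exists X; split => //; exists ps, e; split => //; split => //; split => //; split => //.
  move=> p hp; have sp := NA_semi H (hps p hp).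
  have := cdist_tri H sp (hw.1 p (hps p hp)) (hv.1 p (hps p hp))
    ((eta_in_lim (pc_rep X) H).1 p (hps p hp)).
  have := hd p hp; have := hwv p hp => /= h1 h2 h3; lra.
move=> X; split.
  move=> VX; have [Ns [e [ep [hNs k]]]] := hV X VX.
  have [ps [hps kk]] := extract e hNs.
  exists (eta (pc_rep X)); split.
    by rewrite rep_spec; apply: pc_class_eta.
  exists X; split => //; exists ps, e; split => //; split => //; split.
    move=> Y hY; apply: k => N hN; apply: kk => // p hp.
    rewrite pc_sub_rep //; [exact: hY|exact: hps].
  split; first exact: eta_in_lim.
  move=> p hp; rewrite /eta cdist_const // ?(Rsubrr H) ?(sn0 H (NA_semi H (hps p hp))) //.
  exact: NA_semi (hps p hp).
move=> [v [Xv [Y [VY [ps [e [ep [hps [kV [hv hc]]]]]]]]]].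
have [_ hvX] := class_rep Xv.
apply: kV => p hp; have sp := NA_semi H (hps p hp).
have := hc p hp; rewrite /eta (cdist_near_l (pc_rep Y) H sp (hvX p (hps p hp))) //.
Qed.

Lemma closure_of_ext (T : Type) (op1 op2 : (T -> Prop) -> Prop) S x :
  (forall U, op1 U <-> op2 U) -> closure_of op1 S x <-> closure_of op2 S x.
Proof. by move=> h; split => hc U /h hU; apply: hc. Qed.

Lemma PC_tsa (A : raw) : is_star_alg A -> is_tsa (PC A).
Proof. move=> H; apply: (sn_tsa (sa_PC H) (FPC_semi H)); exact: PCtop. Qed.

Lemma FPC_NA (A : raw) (N : PC A -> RR) : is_star_alg A -> FPC N -> NA N.
Proof.
move=> H hN; have sN := FPC_semi H hN; split.
  split; first exact: sn_add sN.
  split; first exact: sn_scal sN.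
  split; first exact: sn_mul sN.
  case: hN => p [hp ->] X; case: (alpha_surj X) => x ->.
  rewrite pc_star // pc_mul // !p_rep //; by case: hp => [[_ [_ [_ C]]] _].
apply: (sn_cont (sa_PC H) (FPC_semi H)) => //.
by move=> U /(PCtop H U).
Qed.

Lemma PC_Pstar (A : raw) : is_star_alg A -> in_PstarA (PC A).
Proof.
move=> H; split.
  move=> X hX; rewrite -(alpha_rep X) pc_zero; apply/(alpha_eqP _ _ H).
  move=> p hp; rewrite (Rsub0 H).
  have := hX (fun Y : PC A => p (pc_rep Y)) (FPC_NA H (ex_intro _ p (conj hp erefl))).
  by [].
move=> U; change (pc_open U <-> sn_open (@NA (PC A)) U).
have e := @sn_eq (PC A) (@FPC A) (@NA (PC A)) (sa_PC H) (FPC_semi H)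
  (NA_semiF (sa_PC H)) (fun N hN => FPC_NA H hN) (fun N hN => hN.2) (PCtop H).
by rewrite -e; exact: PCtop.
Qed.

Lemma part_alpha (A : raw) (S : A -> Prop) x : is_star_alg A ->
  cstar S x <-> K_alpha S x.
Proof.
move=> H; rewrite /K_alpha (closure_of_ext _ _ (PCtop H)).
rewrite (sn_closure _ _ (sa_PC H) (FPC_semi H)) (cstar_char _ _ H); split.
  move=> h Ns e ep hNs.
  have [ps [hps k]] := extract e hNs.
  have [s [Ss hs]] := h ps e ep hps.
  exists (alpha s); split; first by exists s.
  apply: k => p hp; rewrite pc_sub // p_rep //; [exact: hs|exact: hps].
move=> h ps e ep hps.
have hN : forall N, List.In N (List.map (fun p (Y : PC A) => p (pc_rep Y)) ps) -> FPC N.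
  by move=> q hq; apply: (map_pred (Q := @FPC A) hps _ hq) => p hp; exists p.
have [Y [[s [Ss ->]] hY]] := h _ e ep hN.
exists s; split => // p hp.
have hh : p (pc_rep (@rsub (PC A) (alpha s) (alpha x))) < e :=
  hY _ (List.in_map (fun p (Y : PC A) => p (pc_rep Y)) _ _ hp).
by rewrite pc_sub // p_rep // in hh; exact: hps.
Qed.

Lemma part_eta (A : raw) (S : A -> Prop) x : is_star_alg A ->
  cstar S x <-> K_eta S x.
Proof.
move=> H; rewrite /K_eta (cstar_char _ _ H); split.
  move=> h; split; first exact: eta_in_lim.
  move=> U oU Ux.
  have [ps [e [ep [hps k]]]] := oU _ (eta_in_lim x H) Ux.
  have [s [Ss hs]] := h ps e ep hps.
  exists (eta s); split; first exact: eta_in_lim.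
  split.
    apply: k; first exact: eta_in_lim.
    by move=> p hp; rewrite /eta cdist_const //; [exact: hs|exact: NA_semi (hps p hp)].
  split; first exact: eta_in_lim.
  by exists s; split => //; exact: lim_eq_refl.
move=> [hx h] ps e ep hps.
have [v [hv [[_ hvb] [_ [s [Ss hvs]]]]]] :=
  h _ (@lball_open _ _ ps e H (eta_in_lim x H) hps) (@lball_center _ _ ps e H (eta_in_lim x H) ep hps).
exists s; split => // p hp; have sp := NA_semi H (hps p hp).
have := hvb p hp; by rewrite /eta (cdist_near_l x H sp (hvs p (hps p hp))).
Qed.

Lemma alpha_inj_red (A : raw) : is_star_alg A ->
  (forall x y : A, alpha x = alpha y -> x = y) <-> (forall x y : A, reducing (rsub x y) -> x = y).
Proof.
move=> H; split => h x y.
  by move=> hr; apply: h; apply/(alpha_eqP _ _ H).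
by move/(alpha_eqP _ _ H); apply: h.
Qed.

Lemma red_zero_iff (A : raw) : is_star_alg A ->
  (forall x y : A, reducing (rsub x y) -> x = y) <-> (forall x : A, reducing x -> x = rzero).
Proof.
move=> H; split => h.
  by move=> x hx; apply: h; rewrite (Rsub0 H).
by move=> x y hr; apply: (Rsub_eq0 H); apply: h.
Qed.

Lemma sep_iff (A : raw) : is_tsa A ->
  cstar_separated A <-> (forall x y : A, reducing (rsub x y) -> x = y).
Proof.
move=> hA; have H := tsa_sa hA; split.
  by move=> hs x y hr; apply: ((hs (x, y)).1); apply/cstar_diag.
move=> h [x y]; split.
  by move/(cstar_diag x y hA); apply: h.
move=> /= e; rewrite e; apply/cstar_diag => //.
by move=> p hp; rewrite (Rsubrr H) (sn0 H (NA_semi H hp)).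
Qed.

Lemma closure_of_mono (T : Type) (op : (T -> Prop) -> Prop) (S1 S2 : T -> Prop) x :
  (forall y, S1 y -> S2 y) -> closure_of op S1 x -> closure_of op S2 x.
Proof. by move=> h hc U oU Ux; have [y [Uy Sy]] := hc U oU Ux; exists y; split => //; apply: h. Qed.

Lemma In_app_l (T : Type) (a : T) l1 l2 : List.In a l1 -> List.In a (l1 ++ l2).
Proof. by move=> h; apply/List.in_app_iff; left. Qed.
Lemma In_app_r (T : Type) (a : T) l1 l2 : List.In a l2 -> List.In a (l1 ++ l2).
Proof. by move=> h; apply/List.in_app_iff; right. Qed.

Lemma d1 (A : raw) : is_tsa A -> cstar_compact A -> K_compact (PC A).
Proof.
move=> hA hc B hB hPB S hS b; have H := tsa_sa hA; have HB := tsa_sa hB; split.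
  move=> [X hX] V oV Vb.
  have oW : @ropen (prod_raw (PC A) B) (fun z => V z.2).
    move=> z Vz; exists (fun _ => True), V; split; first by case: (tsa_top (PC_tsa H)).
    by split => //; split => //; split.
  have [[y1 y2] [Vy Sy]] := hX _ oW Vb.
  by exists y2; split => //; exists y1.
move=> hb.
pose S' := fun w : prod_raw A B => S ((alpha w.1, w.2) : prod_raw (PC A) B).
have hS' : is_ssub S'.
  case: hS => [h0 [hadd [hsc [hmul hst]]]].
  split; first exact: h0.
  split.
    move=> x y hx hy; have h := hadd _ _ hx hy.
    change (S ((@radd (PC A) (alpha x.1) (alpha y.1), radd x.2 y.2))) in h.
    by rewrite pc_add in h.
  split.
    move=> l x hx; have h := hsc l _ hx.
    change (S ((@rscal (PC A) l (alpha x.1), rscal l x.2))) in h.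
    by rewrite pc_scal in h.
  split.
    move=> x y hx hy; have h := hmul _ _ hx hy.
    change (S ((@rmul (PC A) (alpha x.1) (alpha y.1), rmul x.2 y.2))) in h.
    by rewrite pc_mul in h.
  move=> x hx; have h := hst _ hx.
  change (S ((@rstar (PC A) (alpha x.1), rstar x.2))) in h.
  by rewrite pc_star in h.
have hb' : cstar (fun b' : B => exists a : A, S' ((a, b') : prod_raw A B)) b.
  rewrite /cstar -(closure_of_ext _ _ hPB.2).
  apply: closure_of_mono hb => y [X hX]; exists (pc_rep X); rewrite /S' /= alpha_rep //.
have [a ha] := (hc B hB S' hS' b).2 hb'.
exists (alpha a) => W oW Wab.
have [U [V [oU [oV [Ua [Vb k]]]]]] := oW _ Wab.
have [Ns [e1 [e1p [hNs kU]]]] := (PCtop H U).1 oU _ Ua.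
have [ps1 [hps1 kk1]] := extract e1 hNs.
have [qs [e2 [e2p [hqs kV]]]] := (hPB.2 V).1 oV _ Vb.
have HP := sa_prod H HB.
have hL : forall r, List.In r (List.map (fun p (z : prod_raw A B) => p z.1) ps1 ++
    List.map (fun q (z : prod_raw A B) => q z.2) qs) -> NA r.
  move=> r /List.in_app_iff [hr|hr].
    by apply: (map_pred hps1 _ hr) => p hp; apply: NA_fst.
  by apply: (map_pred hqs _ hr) => p hp; apply: NA_snd.
have ep : 0 < Order.min e1 e2 by rewrite lt_min e1p e2p.
have [w [Sw hw]] := (cstar_char _ _ HP).1 ha _ _ ep hL.
exists ((alpha w.1, w.2) : prod_raw (PC A) B); split => //.
apply: k.
  apply: kU => N hN; apply: kk1 => // p hp.
  rewrite pc_sub // p_rep //; last exact: hps1.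
  have := hw (fun z : prod_raw A B => p z.1)
    (In_app_l _ (List.in_map (fun p (z : prod_raw A B) => p z.1) _ _ hp)).
  move=> h1; apply: lt_le_trans h1 _; by rewrite ge_min lexx.
apply: kV => q hq.
have := hw (fun z : prod_raw A B => q z.2)
  (In_app_r _ (List.in_map (fun q (z : prod_raw A B) => q z.2) _ _ hq)).
move=> h1; apply: lt_le_trans h1 _; by rewrite ge_min lexx orbT.
Qed.

Lemma d2 (A : raw) : is_tsa A -> K_compact (PC A) -> cstar_compact A.
Proof.
move=> hA hK B hB S hS b; have H := tsa_sa hA; have HB := tsa_sa hB.
have HP := sa_prod H HB; split.
  move=> [a ha]; apply/(cstar_char _ _ HB) => qs e ep hqs.
  have [w [Sw hw]] := (cstar_char _ _ HP).1 ha
    (List.map (fun q (z : prod_raw A B) => q z.2) qs) e ep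
    (map_pred hqs (fun q hq => NA_snd hA hB hq)).
  exists w.2; split; first by exists w.1; case: w Sw hw.
  move=> q hq; exact: (hw _ (List.in_map (fun q (z : prod_raw A B) => q z.2) _ _ hq)).
move=> hb.
pose S2 := fun Z : prod_raw (PC A) (PC B) =>
  exists w : prod_raw A B, S w /\ Z = (alpha w.1, alpha w.2).
have hS2 : is_ssub S2.
  case: hS => [h0 [hadd [hsc [hmul hst]]]].
  split; first by exists rzero; split.
  split.
    move=> Z Z' [w [Sw ->]] [w' [Sw' ->]]; exists (radd w w'); split; first exact: hadd.
    change ((@radd (PC A) (alpha w.1) (alpha w'.1), @radd (PC B) (alpha w.2) (alpha w'.2))
      = (alpha (radd w.1 w'.1), alpha (radd w.2 w'.2))).
    by rewrite !pc_add.
  split.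
    move=> l Z [w [Sw ->]]; exists (rscal l w); split; first exact: hsc.
    change ((@rscal (PC A) l (alpha w.1), @rscal (PC B) l (alpha w.2))
      = (alpha (rscal l w.1), alpha (rscal l w.2))).
    by rewrite !pc_scal.
  split.
    move=> Z Z' [w [Sw ->]] [w' [Sw' ->]]; exists (rmul w w'); split; first exact: hmul.
    change ((@rmul (PC A) (alpha w.1) (alpha w'.1), @rmul (PC B) (alpha w.2) (alpha w'.2))
      = (alpha (rmul w.1 w'.1), alpha (rmul w.2 w'.2))).
    by rewrite !pc_mul.
  move=> Z [w [Sw ->]]; exists (rstar w); split; first exact: hst.
  change ((@rstar (PC A) (alpha w.1), @rstar (PC B) (alpha w.2))
    = (alpha (rstar w.1), alpha (rstar w.2))).
  by rewrite !pc_star.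
have hcl : closure_of (@ropen (PC B)) (fun b' => exists a, S2 ((a, b') : prod_raw (PC A) (PC B)))
    (alpha b).
  apply/(closure_of_ext _ _ (PCtop HB)).
  apply/(sn_closure _ _ (sa_PC HB) (FPC_semi HB)) => Ns e ep hNs.
  have [ps [hps kk]] := extract e hNs.
  have [s' [[a Sa] hs']] := (cstar_char _ _ HB).1 hb ps e ep hps.
  exists (alpha s'); split; first by exists (alpha a); exists (a, s'); split.
  apply: kk => // p hp; rewrite pc_sub // p_rep //; [exact: hs'|exact: hps].
have [X hX] := (hK (PC B) (PC_tsa HB) (PC_Pstar HB) S2 hS2 (alpha b)).2 hcl.
exists (pc_rep X); apply/(cstar_char _ _ HP) => qs e ep hqs.
have e2 : 0 < e / 2 by lra.
set L1 := List.map (fun q (Z : PC A) => q (pc_rep Z, rzero)) qs.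
set L2 := List.map (fun q (Z : PC B) => q (rzero, pc_rep Z)) qs.
have hL1 : forall N, List.In N L1 -> FPC N.
  move=> N hN; apply: (map_pred (Q := @FPC A) hqs _ hN) => q hq.
  by exists (fun x => q (x, rzero)); split => //; apply: NA_inl.
have hL2 : forall N, List.In N L2 -> FPC N.
  move=> N hN; apply: (map_pred (Q := @FPC B) hqs _ hN) => q hq.
  by exists (fun x => q (rzero, x)); split => //; apply: NA_inr.
have oW : @ropen (prod_raw (PC A) (PC B))
    (fun z => sball L1 X (e / 2) z.1 /\ sball L2 (alpha b) (e / 2) z.2).
  move=> z [z1 z2]; exists (sball L1 X (e / 2)), (sball L2 (alpha b) (e / 2)).
  split; first by apply/(PCtop H); apply: sball_open => //; [exact: sa_PC|exact: FPC_semi].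
  split; first by apply/(PCtop HB); apply: sball_open => //; [exact: sa_PC|exact: FPC_semi].
  by split => //; split => //; split.
have c1 : sball L1 X (e / 2) X.
  apply: sball_center => //; [exact: sa_PC|move=> N hN; exact: FPC_semi (hL1 N hN)].
have c2 : sball L2 (alpha b) (e / 2) (alpha b).
  apply: sball_center => //; [exact: sa_PC|move=> N hN; exact: FPC_semi (hL2 N hN)].
have [Z [[W1 W2] [w [Sw eZ]]]] := hX _ oW (conj c1 c2).
rewrite eZ /= in W1 W2.
exists w; split => // q hq.
have nq := hqs q hq.
have h1 : q (pc_rep (@rsub (PC A) (alpha w.1) (alpha (pc_rep X))), rzero) < e / 2.
  rewrite alpha_rep.
  exact: (W1 _ (List.in_map (fun q (Z : PC A) => q (pc_rep Z, rzero)) _ _ hq)).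
have h2 : q (rzero, pc_rep (@rsub (PC B) (alpha w.2) (alpha b))) < e / 2.
  exact: (W2 _ (List.in_map (fun q (Z : PC B) => q (rzero, pc_rep Z)) _ _ hq)).
rewrite !pc_sub // in h1 h2.
have r1 := @p_rep _ (rsub w.1 (pc_rep X)) (fun x => q (x, rzero)) H (NA_inl hA hB nq).
have r2 := @p_rep _ (rsub w.2 b) (fun x => q (rzero, x)) HB (NA_inr hA hB nq).
simpl in r1, r2; rewrite r1 in h1; rewrite r2 in h2.
have := q_split H HB (NA_semi HP nq) (rsub w.1 (pc_rep X)) (rsub w.2 b).
change (q (rsub w (pc_rep X, b))) with (q (rsub w.1 (pc_rep X), rsub w.2 b)).
lra.
Qed.

Lemma tends_mul (a b : nat -> RR) l m : tends a l -> tends b m -> tends (fun n => a n * b n) (l * m).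
Proof.
move=> /tends_cvg ha /tends_cvg hb; apply: cvg_tends.
exact: (@cvgM RR nat \oo _ a b l m ha hb).
Qed.

Lemma tends_le_ev (a b : nat -> RR) l m N : tends a l -> tends b m ->
  (forall n, (N <= n)%N -> a n <= b n) -> l <= m.
Proof.
move=> ha hb hab.
apply: (@tends_le (fun n => a (n + N)%N) (fun n => b (n + N)%N)).
- move=> e ep; have [K hK] := ha e ep; exists K => n hn; apply: hK.
  exact: leq_trans hn (leq_addr _ _).
- move=> e ep; have [K hK] := hb e ep; exists K => n hn; apply: hK.
  exact: leq_trans hn (leq_addr _ _).
- by move=> n; apply: hab; exact: leq_addl.
Qed.

Lemma fin_bdd (f : nat -> RR) K : exists M, forall n, (n <= K)%N -> f n <= M.
Proof.
elim: K => [|K [M hM]].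
  by exists (f 0%N) => n; rewrite leqn0 => /eqP ->.
exists (Num.max M (f K.+1)) => n; rewrite leq_eqVlt => /orP [/eqP ->|hn].
  by rewrite le_max lexx orbT.
by rewrite le_max hM.
Qed.

Lemma pcauchy_bdd (A : raw) (p : A -> RR) u : is_star_alg A -> semi p -> pcauchy p u ->
  exists M, 0 <= M /\ forall n, p (u n) <= M.
Proof.
move=> H sp hu; have [N hN] := hu 1 ltr01.
have [M0 hM0] := fin_bdd (fun n => p (u n)) N.
exists (Num.max M0 (p (u N) + 1)); split.
  by rewrite le_max (addr_ge0 (sn_ge0 H sp _) ler01) orbT.
move=> n; have [hn|hn] := leqP n N.
  by rewrite le_max hM0.
rewrite le_max; apply/orP; right.
have := sn_le H sp (u n) (u N); have := hN n N (ltnW hn) (leqnn _) => h1 h2; lra.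
Qed.

Definition cf_ok (A : raw) (v : fam A) : Prop := forall p, NA p -> pcauchy p (v p).
Definition cfc (A : raw) := {v : fam A | cf_ok v}.

Lemma ok_zero (A : raw) : is_star_alg A -> cf_ok (fun _ _ => @rzero A).
Proof. by move=> H p hp; apply: pcauchy_const => //; apply: NA_semi. Qed.

Lemma ok_eta (A : raw) (x : A) : is_star_alg A -> cf_ok (eta x).
Proof. by move=> H p hp; apply: pcauchy_const => //; apply: NA_semi. Qed.

Lemma ok_add (A : raw) (u v : fam A) : is_star_alg A -> cf_ok u -> cf_ok v ->
  cf_ok (fun p n => radd (u p n) (v p n)).
Proof.
move=> H hu hv p hp e ep; have sp := NA_semi H hp; have e2 : 0 < e / 2 by lra.
have [N1 h1] := hu p hp _ e2; have [N2 h2] := hv p hp _ e2.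
exists (maxn N1 N2) => m n hm hn; rewrite (RsubAdd H).
apply: le_lt_trans (sn_add sp _ _) _.
have := h1 m n (leq_trans (leq_maxl _ _) hm) (leq_trans (leq_maxl _ _) hn).
have := h2 m n (leq_trans (leq_maxr _ _) hm) (leq_trans (leq_maxr _ _) hn).
move=> k1 k2; lra.
Qed.

Lemma ok_opp (A : raw) (u : fam A) : is_star_alg A -> cf_ok u -> cf_ok (fun p n => ropp (u p n)).
Proof.
move=> H hu p hp e ep; have [N h] := hu p hp _ ep; exists N => m n hm hn.
by rewrite (RsubOpp H) (snN H (NA_semi H hp)); apply: h.
Qed.

Lemma ok_star (A : raw) (u : fam A) : is_star_alg A -> cf_ok u -> cf_ok (fun p n => rstar (u p n)).
Proof.
move=> H hu p hp e ep; have [N h] := hu p hp _ ep; exists N => m n hm hn.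
by rewrite (RsubStar H) (sn_star (NA_semi H hp)); apply: h.
Qed.

Lemma ok_scal (A : raw) l (u : fam A) : is_star_alg A -> cf_ok u -> cf_ok (fun p n => rscal l (u p n)).
Proof.
move=> H hu p hp e ep; have sp := NA_semi H hp.
have [d [dp [_ dc]]] := delta_exists (cn_ge0 l) ep.
have [N h] := hu p hp _ dp; exists N => m n hm hn.
rewrite (RsubScal H) (sn_scal sp).
have := h m n hm hn; have := cn_ge0 l; have := sn_ge0 H sp (rsub (u p m) (u p n)).
move=> g1 g2 k; nra.
Qed.

Lemma ok_mul (A : raw) (u v : fam A) : is_star_alg A -> cf_ok u -> cf_ok v ->
  cf_ok (fun p n => rmul (u p n) (v p n)).
Proof.
move=> H hu hv p hp e ep; have sp := NA_semi H hp.
have [Mu [Mu0 hMu]] := pcauchy_bdd H sp (hu p hp).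
have [Mv [Mv0 hMv]] := pcauchy_bdd H sp (hv p hp).
have [d [dp [_ dc]]] := delta_exists (addr_ge0 Mu0 Mv0) ep.
have [N1 h1] := hu p hp _ dp; have [N2 h2] := hv p hp _ dp.
exists (maxn N1 N2) => m n hm hn.
apply: le_lt_trans (sn_submul H sp _ _ _ _) _.
have := h1 m n (leq_trans (leq_maxl _ _) hm) (leq_trans (leq_maxl _ _) hn).
have := h2 m n (leq_trans (leq_maxr _ _) hm) (leq_trans (leq_maxr _ _) hn).
have := hMu n; have := hMv m.
have := sn_ge0 H sp (rsub (u p m) (u p n)); have := sn_ge0 H sp (rsub (v p m) (v p n)).
have := sn_ge0 H sp (u p n); have := sn_ge0 H sp (v p m).
move=> g1 g2 g3 g4 k1 k2 k3 k4.
have i1 : p (rsub (u p m) (u p n)) * p (v p m) <= d * Mv.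
  apply: ler_pM => //; exact: ltW.
have i2 : p (u p n) * p (rsub (v p m) (v p n)) <= Mu * d.
  apply: ler_pM => //; exact: ltW.
nra.
Qed.

Definition cf_zero (A : raw) (H : is_star_alg A) : cfc A := exist _ _ (ok_zero H).
Definition cf_add (A : raw) (H : is_star_alg A) (u v : cfc A) : cfc A :=
  exist _ _ (ok_add H (proj2_sig u) (proj2_sig v)).
Definition cf_opp (A : raw) (H : is_star_alg A) (u : cfc A) : cfc A :=
  exist _ _ (ok_opp H (proj2_sig u)).
Definition cf_scal (A : raw) (H : is_star_alg A) l (u : cfc A) : cfc A :=
  exist _ _ (ok_scal l H (proj2_sig u)).
Definition cf_mul (A : raw) (H : is_star_alg A) (u v : cfc A) : cfc A :=
  exist _ _ (ok_mul H (proj2_sig u) (proj2_sig v)).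
Definition cf_star (A : raw) (H : is_star_alg A) (u : cfc A) : cfc A :=
  exist _ _ (ok_star H (proj2_sig u)).
Definition cf_eta (A : raw) (H : is_star_alg A) (x : A) : cfc A := exist _ _ (ok_eta x H).

Definition CF0 (A : raw) (H : is_star_alg A) : raw :=
  @Raw (cfc A) (cf_zero H) (@cf_add A H) (@cf_opp A H) (@cf_scal A H) (@cf_mul A H)
    (@cf_star A H) (fun _ => True).

Definition Np (A : raw) (p : A -> RR) (v : cfc A) : RR := limn (fun n => p (proj1_sig v p n)).

Definition FCF (A : raw) (H : is_star_alg A) (N : cfc A -> RR) : Prop :=
  exists p, NA p /\ N = Np p.

Definition CF (A : raw) (H : is_star_alg A) : raw :=
  @Raw (cfc A) (cf_zero H) (@cf_add A H) (@cf_opp A H) (@cf_scal A H) (@cf_mul A H)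
    (@cf_star A H) (@sn_open (CF0 H) (@FCF A H)).

Lemma cf_eq (A : raw) (u v : cfc A) : proj1_sig u = proj1_sig v -> u = v.
Proof. by case: u => u hu; case: v => v hv /= e; apply: eq_exist. Qed.

Lemma sa_CF (A : raw) (H : is_star_alg A) : is_star_alg (CF H).
Proof.
have E : forall (f g : fam A), (forall p n, f p n = g p n) -> f = g.
  by move=> f g h; apply: funext => p; apply: funext => n; apply: h.
split; first by move=> *; apply: cf_eq; apply: E => *; apply: RaddA.
split; first by move=> *; apply: cf_eq; apply: E => *; apply: RaddC.
split; first by move=> *; apply: cf_eq; apply: E => *; apply: Radd0.
split; first by move=> *; apply: cf_eq; apply: E => *; apply: RaddN.
split; first by move=> *; apply: cf_eq; apply: E => *; apply: RscalD.
split; first by move=> *; apply: cf_eq; apply: E => *; apply: RscalDl.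
split; first by move=> *; apply: cf_eq; apply: E => *; apply: RscalM.
split; first by move=> *; apply: cf_eq; apply: E => *; apply: Rscal1.
split; first by move=> *; apply: cf_eq; apply: E => *; apply: RmulA.
split; first by move=> *; apply: cf_eq; apply: E => *; apply: RmulDr.
split; first by move=> *; apply: cf_eq; apply: E => *; apply: RmulDl.
split; first by move=> *; apply: cf_eq; apply: E => *; apply: RscalmL.
split; first by move=> *; apply: cf_eq; apply: E => *; apply: RscalmR.
split; first by move=> *; apply: cf_eq; apply: E => *; apply: RstarK.
split; first by move=> *; apply: cf_eq; apply: E => *; apply: RstarD.
split; first by move=> *; apply: cf_eq; apply: E => *; apply: RstarS.
by move=> *; apply: cf_eq; apply: E => *; apply: RstarM.
Qed.

Lemma Np_tends (A : raw) (p : A -> RR) (v : cfc A) : is_star_alg A -> NA p ->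
  tends (fun n => p (proj1_sig v p n)) (Np p v).
Proof.
move=> H hp; have sp := NA_semi H hp.
have := pc_cdist H sp (proj2_sig v p hp) (pcauchy_const rzero H sp).
have -> : (fun n => p (rsub (proj1_sig v p n) rzero)) = (fun n => p (proj1_sig v p n)).
  by apply: funext => n; rewrite (Rsub0 H).
move=> h; by rewrite /Np (tends_lim h).
Qed.

Lemma Np_semi (A : raw) (H : is_star_alg A) (p : A -> RR) : NA p -> semi (A := CF H) (Np p).
Proof.
move=> hp; have sp := NA_semi H hp; have T := fun v => Np_tends v H hp.
split.
  move=> u v; apply: (tends_le (T _) (tends_add (T u) (T v))) => n.
  exact: sn_add.
split.
  move=> l u; apply: tends_uniq (T _) _.
  have -> : (fun n => p (proj1_sig (@rscal (CF H) l u) p n)) =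
            (fun n => cnorm l * p (proj1_sig u p n)).
    by apply: funext => n; exact: sn_scal.
  exact: tends_mul (tends_const _) (T u).
split.
  move=> u v; apply: (tends_le (T _) (tends_mul (T u) (T v))) => n.
  exact: sn_mul.
move=> u; apply: tends_uniq (T _) _.
have -> : (fun n => p (proj1_sig (@rstar (CF H) u) p n)) = (fun n => p (proj1_sig u p n)).
  by apply: funext => n; exact: sn_star.
exact: T.
Qed.

Lemma FCF_semi (A : raw) (H : is_star_alg A) : semiF (A := CF H) (@FCF A H).
Proof. by move=> N [p [hp ->]]; apply: Np_semi. Qed.

Lemma CF_open (A : raw) (H : is_star_alg A) U : @ropen (CF H) U <-> sn_open (A := CF H) (@FCF A H) U.
Proof. by []. Qed.

Lemma CF_tsa (A : raw) (H : is_star_alg A) : is_tsa (CF H).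
Proof. apply: (@sn_tsa (CF H) (@FCF A H)). exact: sa_CF. exact: FCF_semi. exact: CF_open. Qed.

Lemma Np_NA (A : raw) (H : is_star_alg A) (p : A -> RR) : NA p -> NA (A := CF H) (Np p).
Proof.
move=> hp; have sN := Np_semi H hp; split.
  split; first exact: sn_add sN.
  split; first exact: sn_scal sN.
  split; first exact: sn_mul sN.
  move=> u; have T := fun v => Np_tends v H hp.
  apply: tends_uniq (T _) _.
  have -> : (fun n => p (proj1_sig (@rmul (CF H) (@rstar (CF H) u) u) p n)) =
            (fun n => p (proj1_sig u p n) * p (proj1_sig u p n)).
    by apply: funext => n; case: hp => [[_ [_ [_ C]]] _]; rewrite /= C expr2.
  by rewrite expr2; exact: tends_mul (T u) (T u).
apply: (@sn_cont (CF H) (@FCF A H) (Np p) (sa_CF H) (@FCF_semi A H)).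
  by move=> U hU.
by exists p.
Qed.

Lemma extractF (A : raw) (H : is_star_alg A) (Ns : list (cfc A -> RR)) (d : RR) :
  (forall N, List.In N Ns -> @FCF A H N) ->
  exists ps, (forall p, List.In p ps -> NA p) /\
    forall y, (forall p, List.In p ps -> Np p y < d) -> forall N, List.In N Ns -> N y < d.
Proof.
elim: Ns => [|N Ns IH] h.
  by exists nil; split => // y _ N [].
have [ps [hps k]] := IH (fun M hM => h M (or_intror hM)).
have [p [hp ->]] := h N (or_introl erefl).
exists (p :: ps); split.
  by move=> q [<-|hq]; [exact: hp|exact: hps].
move=> y hy M [<-|hM]; first by apply: hy; left.
by apply: k => // q hq; apply: hy; right.
Qed.

Lemma d3 (A : raw) : is_tsa A -> cstar_compact A -> eta_surjective A.
Proof.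
move=> hA hc u hu; have H := tsa_sa hA.
have hC := CF_tsa H; have HC := sa_CF H.
pose uh : cfc A := exist _ u hu.1.
pose S := fun w : prod_raw A (CF H) => w.2 = cf_eta H w.1.
have hS : is_ssub S.
  split; first by apply: cf_eq.
  split; first by move=> [x1 x2] [y1 y2]; rewrite /S /= => -> ->; apply: cf_eq.
  split; first by move=> l [x1 x2]; rewrite /S /= => ->; apply: cf_eq.
  split; first by move=> [x1 x2] [y1 y2]; rewrite /S /= => -> ->; apply: cf_eq.
  by move=> [x1 x2]; rewrite /S /= => ->; apply: cf_eq.
have hcl : cstar (fun b' : CF H => exists a, S ((a, b') : prod_raw A (CF H))) uh.
  apply/(cstar_char _ _ HC) => qs e ep hqs.
  have [Ns [d [dp [hNs kk]]]] := @combine_lists (CF H) (@FCF A H) (@NA (CF H)) uh e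
    (fun q hq => @sn_dom (CF H) (@FCF A H) q HC (NA_semi HC hq) hq.2
       (fun U hU => hU) uh e ep) qs hqs.
  have [ps [hps kex]] := extractF d hNs.
  have [pt [hpt dom]] := NA_dom hA hps.
  have d2 : 0 < d / 2 by lra.
  have [N0 hN0] := hu.1 pt hpt _ d2.
  pose a := u pt N0.
  exists (cf_eta H a); split; first by exists a.
  apply: kk; apply: kex => p hp.
  have np := hps p hp; have sp := NA_semi H np; have spt := NA_semi H hpt.
  have T := Np_tends (@rsub (CF H) (cf_eta H a) uh) H np.
  have hcomp := hu.2 p pt np hpt (dom p hp).
  move/pnull_tends: hcomp => hcomp.
  have le : Np p (@rsub (CF H) (cf_eta H a) uh) <= d / 2 + 0.
    apply: (tends_le_ev (N := N0) T (tends_add (tends_const (d / 2)) hcomp)) => n hn.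
    change (p (rsub a (u p n)) <= d / 2 + p (rsub (u pt n) (u p n))).
    apply: le_trans (sn_tri H sp (u p n) (u pt n) a) _.
    apply: lerD => //.
    apply: le_trans (dom p hp _) _.
    exact: ltW (hN0 N0 n (leqnn _) hn).
  lra.
have [a ha] := (hc (CF H) hC S hS uh).2 hcl.
exists a => p hp; have sp := NA_semi H hp.
have HP := sa_prod H HC.
have T1 := pc_cdist H sp (hu.1 p hp) (pcauchy_const a H sp).
set L := cdist p (u p) (fun _ => a) in T1.
have L0 : L <= 0.
  apply: le0_of_lt => e ep; have e2 : 0 < e / 2 by lra.
  have hN : forall q, List.In q [:: (fun w : prod_raw A (CF H) => p w.1);
      (fun w : prod_raw A (CF H) => Np p w.2)] -> NA q.
    move=> q [<-|[<-|[]]]; first exact: NA_fst.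
    by apply: NA_snd => //; exact: Np_NA.
  have [w [Sw k]] := (cstar_char _ _ HP).1 ha _ _ e2 hN.
  have k1 := k _ (or_introl erefl); have k2 := k _ (or_intror (or_introl erefl)).
  have k1b : p (rsub w.1 a) < e / 2 := k1.
  have k2b : Np p (@rsub (CF H) w.2 uh) < e / 2 := k2.
  rewrite Sw in k2b.
  have T2 := Np_tends (@rsub (CF H) (cf_eta H w.1) uh) H hp.
  have hh : L <= Np p (@rsub (CF H) (cf_eta H w.1) uh) + p (rsub w.1 a).
    apply: (tends_le T1 (tends_add T2 (tends_const _))) => n.
    change (p (rsub (u p n) a) <= p (rsub w.1 (u p n)) + p (rsub w.1 a)).
    rewrite (sn_sym H sp w.1 (u p n)); exact: sn_tri.
  lra.
have L0' : L = 0.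
  by apply/eqP; rewrite eq_le L0 (cdist_ge0 H sp (hu.1 p hp) (pcauchy_const a H sp)).
apply/pnull_tends; by rewrite -L0'.
Qed.
Close Scope ring_scope. Close Scope classical_set_scope. Unset Implicit Arguments.
Theorem theorem5p2 :
  (* (a) c* = K^alpha = K^eta *)
  (forall (A : raw), is_tsa A -> forall S : A -> Prop, is_ssub S ->
     (forall x : A, cstar S x <-> K_alpha S x) /\
     (forall x : A, cstar S x <-> K_eta S x)) /\
  (* (b) finite productivity *)
  (forall (A B : raw), is_tsa A -> is_tsa B ->
     forall (S : A -> Prop) (T : B -> Prop), is_ssub S -> is_ssub T ->
     forall z : prod_raw A B,
       cstar (fun w : prod_raw A B => S w.1 /\ T w.2) z <->
       (cstar S z.1 /\ cstar T z.2)) /\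
  (* (c) separatedness *)
  (forall (A : raw), is_tsa A ->
     (cstar_separated A <-> (forall x y : A, alpha x = alpha y -> x = y)) /\
     ((forall x y : A, alpha x = alpha y -> x = y) <->
        (forall x : A, reducing x -> x = rzero))) /\
  (forall (A : raw), is_tsa A -> in_PstarA A -> cstar_separated A) /\
  (* (d) compactness *)
  (forall (A : raw), is_tsa A ->
     (cstar_compact A <-> K_compact (PC A)) /\
     (cstar_compact A -> eta_surjective A)).
Proof.
split.
  move=> A hA S _; have H := tsa_sa hA.
  by split => x; [exact: part_alpha|exact: part_eta].
split.
  by move=> A B hA hB S T _ _ z; exact: partb.
split.
  move=> A hA; have H := tsa_sa hA; split.
    rewrite (sep_iff hA); symmetry; exact: alpha_inj_red.
  rewrite (alpha_inj_red H); exact: red_zero_iff.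
split.
  move=> A hA hP; have H := tsa_sa hA.
  apply/(sep_iff hA); apply/(red_zero_iff H); exact: hP.1.
move=> A hA; split; first by split; [exact: d1|exact: d2].
exact: d3.
Qed.
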